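(* Let $C_2$ be the 2-chain and $V$ the vee poset. Then $[C_2\odot V]'=\{S_3|_{0,1}\}$: the only poset $P$ with $P\oslash' V\cong C_2$ and $P\not\cong C_2$ is the poset $S_3|_{0,1}$.
   Context: $C_2=\{x<y\}$. The vee $V$ is the 3-element poset $\{x,y,z\}$ with $x<y$, $x<z$ (one minimal element below two maximal elements). $S_3|_{0,1}$ is the 10-element poset consisting of the four 1-element subsets and the six 2-element subsets of $\{1,2,3,4\}$, ordered by inclusion (the vertices and edges of a tetrahedron). Notation for a poset $P$: $J^-(a)=\{c:c\le a\}$, $J^+(a)=\{c:a\le c\}$; $\ell(X)$ is the cardinality of a longest chain of a poset $X$. A subset $A$ of a poset $X$ is maximally ordered in $X$ if $|\{(a,b)\in A\times A:a<b\}|$ is maximal among subsets of $X$ of cardinality $|A|$. $A\subseteq P$ is linked if for all $a<b$ in $A$, either $b$ covers $a$ or there exists $c\in J^+(a)\cap J^-(b)$ with $c\in A$. For $\sigma\in\mathrm{Aut}(P)$, $\Sigma(\sigma)=\{a:\sigma(a)\ne a\}$. For finite $Q$ and $r\ge2$: $\sigma$ is a $(Q,r)$-generator if there exist subsets $S_0,\dots,S_{r-1}\subset\Sigma(\sigma)$, each isomorphic to $Q$, which are smallest maximally ordered subsets of $\Sigma(\sigma)$ with $\sigma(S_i)=S_{(i+1)\bmod r}$, $\ell(S_i)=\ell(\Sigma(\sigma))$, $\bigcup_iS_i=\Sigma(\sigma)$; distinct $S_i,S_j$ are $(Q,r)$-symmetric subsets. Elements $a,b$ are $(Q,r,0)$-symmetric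 if $a=b$; $(Q,r,1)$-symmetric if there are $(Q,r)$-symmetric subsets $A,B$ with generator $\sigma$, $a\in A$, $b=\sigma^q(a)\in B$, $1\le q<r$; for $n\ge2$, $(Q,r,n)$-symmetric if not $(Q,r,j)$-symmetric for $j<n$ but there exist $c$, $j<n$ with $a$ $(Q,r,j)$-symmetric to $c$ and $c$ $(Q,r,n-j)$-symmetric to $b$; $(Q,r)$-symmetric if $(Q,r,n)$-symmetric for some $n\ge0$ (an equivalence relation). $P\oslash_rQ$ is the quotient poset of equivalence classes with $E\le F$ iff some $e\in E$, $f\in F$ satisfy $e\le f$. For a linked subset $A\cong Q$, the $(Q,r)$-symmetry group of $A$ is the largest subgroup of $\mathrm{Aut}(P)$ of $(Q,r)$-generators whose action fixes every $b\in P$ to which no $a\in A$ is $(Q,r)$-symmetric; the $(Q,r)$-symmetry set of $A$ is the set of elements not fixed by this group. The symmetry of a $(Q,r)$-symmetry set $S$ is composite if there exist a finite poset $\hat Q$, $\hat r\ge2$ and a $(\hat Q,\hat r)$-symmetry set $\hat S\subseteq S$ with either $\hat Q$ a proper subposet of $Q$, or $\hat Q=Q$ and $\hat r<r$; prime otherwise. $P\oslash'_rQ$ is the retraction using only prime $(Q,r)$-symmetries, and $[R\odot_rQ]'=\{P:P\oslash'_rQ\cong R,\ P\not\cong R\}$; for $r=2$ the index is dropped. *)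

(* Defs.v *)
From Stdlib Require Import Relations.
From mathcomp Require Import all_boot all_order all_fingroup.
Set Implicit Arguments. Unset Strict Implicit. Unset Printing Implicit Defensive.

Definition poset_ax (T : finType) (le : rel T) :=
  reflexive le /\ antisymmetric le /\ transitive le.

Definition iso_sub (T U : finType) (leT : rel T) (A : {set T})
    (leU : rel U) (B : {set U}) : Prop :=
  exists f : T -> U, {in A &, injective f} /\ [set f x | x in A] = B /\
    (forall x y, x \in A -> y \in A -> leU (f x) (f y) = leT x y).

(* (eqv-quotient of (T,le), with E <= F iff some e in E, f in F have e <= f)
   is isomorphic to (U, leU) *)
Definition quot_iso (T U : finType) (le : rel T) (eqv : T -> T -> Prop)
    (leU : rel U) : Prop :=
  exists f : T -> U, (forall u, exists x, f x = u) /\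
    (forall x y, f x = f y <-> eqv x y) /\
    (forall u v, leU u v <-> exists x y, [/\ f x = u, f y = v & le x y]).

Section Sym.
Variables (T : finType) (le : rel T).
Variables (U : finType) (leQ : rel U).

Definition lt (x y : T) := (x != y) && le x y.
Definition covers (a b : T) := lt a b && [forall c, ~~ (lt a c && lt c b)].

Definition isAut (s : {perm T}) := forall x y, le (s x) (s y) = le x y.
Definition Sigma (s : {perm T}) : {set T} := [set x | s x != x].

Definition chainb (C : {set T}) :=
  [forall x in C, forall y in C, le x y || le y x].
Definition ell (X : {set T}) : nat :=
  \max_(C : {set T} | (C \subset X) && chainb C) #|C|.

Definition nlt (A : {set T}) : nat :=
  #|[set p : T * T | [&& p.1 \in A, p.2 \in A & lt p.1 p.2]]|.
Definition max_ordered (A X : {set T}) : Prop :=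
  A \subset X /\
  (forall B : {set T}, B \subset X -> #|B| = #|A| -> nlt B <= nlt A).

Definition fam_ok (s : {perm T}) (r : nat) (S : nat -> {set T}) : Prop :=
  (forall i, i < r -> max_ordered (S i) (Sigma s) /\ ell (S i) = ell (Sigma s)) /\
  (forall i, i < r -> [set s x | x in S i] = S (i.+1 %% r)) /\
  (forall x, x \in Sigma s <-> exists2 i, i < r & x \in S i).

(* s is a (Q,r)-generator witnessed by the family S (Q = (U, leQ, B)) *)
Definition generator_fam (B : {set U}) (r : nat) (s : {perm T})
    (S : nat -> {set T}) : Prop :=
  [/\ 2 <= r, isAut s, fam_ok s r S,
      (forall i, i < r -> iso_sub le (S i) leQ B) &
      (forall S', fam_ok s r S' -> #|S 0| <= #|S' 0|)].

Definition generator (B : {set U}) (r : nat) (s : {perm T}) : Prop :=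
  exists S, generator_fam B r s S.

Definition R1_by (ok : {perm T} -> Prop) (B : {set U}) (r : nat) (a b : T) : Prop :=
  exists s S i j q, [/\ generator_fam B r s S, ok s, i < r, j < r & S i != S j] /\
    [/\ a \in S i, b = iter q s a, b \in S j, 1 <= q & q < r].

Definition symrel (B : {set U}) (r : nat) : T -> T -> Prop :=
  clos_refl_sym_trans T (R1_by (fun _ => True) B r).

Definition linked (A : {set T}) : Prop :=
  forall a b, a \in A -> b \in A -> lt a b ->
    covers a b \/ exists c, [/\ c \in A, lt a c & lt c b].

(* generators of the (Q,r)-symmetry group of A *)
Definition admissible (B : {set U}) (r : nat) (A : {set T}) (s : {perm T}) : Prop :=
  generator B r s /\
  (forall b, ~ (exists2 a, a \in A & symrel B r a b) -> s b = b).

Inductive in_gen (G : {perm T} -> Prop) : {perm T} -> Prop :=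
| in_gen1 : in_gen G 1%g
| in_genM s t : G s -> in_gen G t -> in_gen G (s * t)%g.

Definition symset (B : {set U}) (r : nat) (A : {set T}) (x : T) : Prop :=
  exists g, in_gen (admissible B r A) g /\ g x != x.

Definition is_symset (B : {set U}) (r : nat) (S : T -> Prop) : Prop :=
  exists A : {set T}, [/\ linked A, iso_sub le A leQ B &
    forall x, S x <-> symset B r A x].

Definition composite (B : {set U}) (r : nat) (S : T -> Prop) : Prop :=
  exists (B' : {set U}) (r' : nat) (S' : T -> Prop),
    [/\ 2 <= r', is_symset B' r' S', (exists x, S' x), (forall x, S' x -> S x) &
        (B' \proper B \/ (B' = B /\ r' < r))].

Definition prime_ok (B : {set U}) (r : nat) (s : {perm T}) : Prop :=
  exists A : {set T}, [/\ linked A, iso_sub le A leQ B, admissible B r A s &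
    ~ composite B r (symset B r A)].

Definition symrel_prime (B : {set U}) (r : nat) : T -> T -> Prop :=
  clos_refl_sym_trans T (R1_by (prime_ok B r) B r).

End Sym.

Definition leC2 : rel 'I_2 := fun x y => val x <= val y.
Definition leV : rel 'I_3 := fun x y => (x == y) || (val x == 0).
Definition S3_01 : {set {set 'I_4}} := [set X : {set 'I_4} | 0 < #|X| <= 2].
Definition leS : rel {set 'I_4} := fun X Y => X \subset Y.

Definition retract_prime_iso (T : finType) (le : rel T) (U : finType) (leQ : rel U)
    (r : nat) (R : finType) (leR : rel R) : Prop :=
  quot_iso le (symrel_prime le leQ [set: U] r) leR.

(* Main.v *)
Require Import Defs.
From mathcomp Require Import all_boot all_order all_fingroup.
From Stdlib Require Import Relations.
From mathcomp Require Import zify.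
Set Implicit Arguments. Unset Strict Implicit. Unset Printing Implicit Defensive.
Section Gen.
Variables (T : finType) (le : rel T).
Hypothesis Hpo : poset_ax le.

Lemma le_refl x : le x x. Proof. by case: Hpo. Qed.
Lemma le_anti x y : le x y -> le y x -> x = y.
Proof. by case: Hpo => _ [H _] a b; apply: H; rewrite a b. Qed.
Lemma le_trans x y z : le x y -> le y z -> le x z.
Proof. by case: Hpo => _ [_ H] a b; apply: H a b. Qed.

Lemma lt_irr x : ~~ lt le x x. Proof. by rewrite /lt eqxx. Qed.
Lemma lt_le x y : lt le x y -> le x y. Proof. by case/andP. Qed.
Lemma lt_neq x y : lt le x y -> x != y. Proof. by case/andP. Qed.
Lemma lt_trans x y z : lt le x y -> lt le y z -> lt le x z.
Proof.
move=> /andP[nxy lxy] /andP[nyz lyz]; apply/andP; split; last exact: le_trans lxy lyz.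
apply/eqP=> exz; subst z; case/eqP: nxy; exact: le_anti.
Qed.
Lemma lt_asym x y : lt le x y -> ~~ lt le y x.
Proof. by move=> h; apply/negP=> h'; move: (lt_trans h h'); rewrite (negbTE (lt_irr x)). Qed.

Lemma isAut1 : isAut le 1%g. Proof. by move=> x y; rewrite !perm1. Qed.
Lemma isAutM s t : isAut le s -> isAut le t -> isAut le (s * t)%g.
Proof. by move=> hs ht x y; rewrite !permM ht hs. Qed.
Lemma isAutV s : isAut le s -> isAut le s^-1%g.
Proof. by move=> hs x y; rewrite -[LHS]hs !permKV. Qed.
Lemma isAutX s n : isAut le s -> isAut le (s ^+ n)%g.
Proof. move=> hs; elim: n => [|n IH]; first by rewrite expg0; exact: isAut1.
by rewrite expgS; apply: isAutM. Qed.
Lemma aut_lt s x y : isAut le s -> lt le (s x) (s y) = lt le x y.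
Proof. by move=> hs; rewrite /lt (inj_eq perm_inj) hs. Qed.

Lemma no_lt_aut s x : isAut le s -> ~~ lt le x (s x).
Proof.
move=> hs; apply/negP=> h.
have H : forall n, lt le x ((s ^+ n.+1)%g x).
  elim=> [|n IH]; first by rewrite expg1.
  apply: lt_trans IH _.
  have -> : (s ^+ n.+2)%g x = (s ^+ n.+1)%g (s x) by rewrite expgS permM.
  rewrite aut_lt //; exact: isAutX.
move: (H (#[s]%g.-1)); rewrite prednK ?order_gt0 // expg_order perm1.
by rewrite (negbTE (lt_irr x)).
Qed.

Definition autrel (a b : T) := exists2 g, isAut le g & g a = b.

Lemma autrel_clos (R : T -> T -> Prop) a b :
  (forall a b, R a b -> autrel a b) -> clos_refl_sym_trans T R a b -> autrel a b.
Proof.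
move=> HR; elim=> [x y /HR //| x|x y _ [g hg <-]|x y z _ [g hg <-] _ [h hh <-]].
- by exists 1%g; [exact: isAut1 | rewrite perm1].
- by exists g^-1%g; [exact: isAutV | rewrite permK].
- by exists (g * h)%g; [exact: isAutM | rewrite permM].
Qed.

Lemma first_step (R : T -> T -> Prop) a b :
  clos_refl_sym_trans T R a b -> a <> b -> exists c, R a c \/ R c a.
Proof.
move=> H0; have := @clos_rst_rst1n T R a b H0; case=> [|y z H _] hab; [by case: hab | by exists y].
Qed.

Lemma R1_autrel (U : finType) (leQ : rel U) ok B r a b :
  R1_by le leQ ok B r a b -> autrel a b.
Proof.
case=> s [S [i [j [q [[[_ hs _ _ _] _ _ _ _] [_ -> _ _ _]]]]]].
by exists (s ^+ q)%g; [exact: isAutX | rewrite permX].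
Qed.

End Gen.
Section H2.
Variables (T : finType) (le : rel T).
Hypothesis Hpo : poset_ax le.
Variable hi : T -> bool.
Hypothesis Hhi : forall p q, lt le p q -> ~~ hi p && hi q.
Hypothesis Hhi2 : forall t, hi t -> exists l, lt le l t.

Lemma aut_hi g t : isAut le g -> hi (g t) = hi t.
Proof.
move=> hg; apply/idP/idP => h.
- case: (Hhi2 h) => l hl; have := hl; rewrite -[l](permKV g) aut_lt //.
  by move/Hhi/andP=> [].
- case: (Hhi2 h) => l hl; have : lt le (g l) (g t) by rewrite aut_lt.
  by move/Hhi/andP=> [].
Qed.

Lemma lt_of_le p q : le p q -> p != q -> lt le p q.
Proof. by move=> h n; rewrite /lt n h. Qed.

Lemma hi_le p q : le p q -> p != q -> ~~ hi p /\ hi q.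
Proof. by move=> h n; have /Hhi/andP[] := lt_of_le h n. Qed.

Lemma chain_inj C : chainb le C -> {in C &, injective hi}.
Proof.
move=> /forallP hC x y xC yC hxy; apply/eqP/negPn/negP => nxy.
have := forallP (implyP (hC x) xC) y; rewrite yC /= => /orP[h|h].
- by have [] := hi_le h nxy; rewrite hxy => /negP.
- by rewrite eq_sym in nxy; have [] := hi_le h nxy; rewrite hxy => /negP.
Qed.

Lemma ell_le2 (X : {set T}) : ell le X <= 2.
Proof.
apply/bigmax_leqP => C /andP[_ hC].
rewrite -(card_in_imset (chain_inj hC)).
by apply: leq_trans (max_card _) _; rewrite card_bool.
Qed.

Lemma ell_ge (X C : {set T}) : C \subset X -> chainb le C -> #|C| <= ell le X.
Proof. by move=> h1 h2; rewrite /ell; apply: (@leq_bigmax_cond _ (fun C : {set T} => (C \subset X) && chainb le C) (fun C : {set T} => #|C|) C); rewrite h1 h2. Qed.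

Lemma ell_le1 (X : {set T}) : (forall p q, p \in X -> q \in X -> ~~ lt le p q) -> ell le X <= 1.
Proof.
move=> hX; apply/bigmax_leqP => C /andP[sCX hC].
rewrite leqNgt; apply/negP => /card_gt1P [x [y [xC yC nxy]]].
have := forallP (implyP (forallP hC x) xC) y; rewrite yC /= => /orP[h|h].
- by move: (hX x y (subsetP sCX _ xC) (subsetP sCX _ yC)); rewrite (lt_of_le h nxy).
- have nyx : y != x by rewrite eq_sym.
  by move: (hX y x (subsetP sCX _ yC) (subsetP sCX _ xC)); rewrite (lt_of_le h nyx).
Qed.

Lemma ell_ge1 (X : {set T}) x : x \in X -> 1 <= ell le X.
Proof.
move=> xX; rewrite -(cards1 x); apply: ell_ge; first by rewrite sub1set.
by apply/forallP => a; apply/implyP => /set1P ->; apply/forallP => b; apply/implyP => /set1P ->; rewrite (le_refl Hpo).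
Qed.

Lemma ell_ge2 (X : {set T}) p q : p \in X -> q \in X -> lt le p q -> 2 <= ell le X.
Proof.
move=> pX qX hpq; have npq := lt_neq hpq.
have <- : #|[set p; q]| = 2 by rewrite cards2 npq.
apply: ell_ge; first by apply/subsetP => t /set2P [] ->.
have lpq := lt_le hpq.
apply/forallP => a; apply/implyP => /set2P [] -> ; apply/forallP => b; apply/implyP => /set2P [] ->;
  by rewrite ?(le_refl Hpo) ?lpq ?orbT.
Qed.

Lemma ell_eq1 (X : {set T}) : (exists x, x \in X) -> (forall p q, p \in X -> q \in X -> ~~ lt le p q) -> ell le X = 1.
Proof. by case=> x xX h; apply/eqP; rewrite eqn_leq ell_le1 // (ell_ge1 xX). Qed.

Lemma ell_eq2 (X : {set T}) p q : p \in X -> q \in X -> lt le p q -> ell le X = 2.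
Proof. by move=> a b c; apply/eqP; rewrite eqn_leq ell_le2 (ell_ge2 a b c). Qed.

Definition loS := [set t | ~~ hi t].
Definition hiS := [set t | hi t].

Lemma nlt_bound (B : {set T}) : nlt le B <= #|B :&: loS| * #|B :&: hiS|.
Proof.
rewrite /nlt -cardsX; apply: subset_leq_card; apply/subsetP => [[p q]].
rewrite !inE /= => /and3P[pB qB hpq]; have /andP[hp hq] := Hhi hpq.
by rewrite pB qB hp hq.
Qed.

Lemma card_lohi (B : {set T}) : #|B :&: loS| + #|B :&: hiS| = #|B|.
Proof.
rewrite -(cardsID hiS B) addnC; congr (_ + _).
by apply: eq_card => t; rewrite !inE andbC.
Qed.

Lemma nlt_le3 (B : {set T}) : #|B| = 3 -> nlt le B <= 2.
Proof. move=> h; apply: leq_trans (nlt_bound B) _; have := card_lohi B; rewrite h; nia. Qed.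
Lemma nlt_le2 (B : {set T}) : #|B| = 2 -> nlt le B <= 1.
Proof. move=> h; apply: leq_trans (nlt_bound B) _; have := card_lohi B; rewrite h; nia. Qed.
Lemma nlt_le1 (B : {set T}) : #|B| = 1 -> nlt le B = 0.
Proof. move=> h; apply/eqP; rewrite -leqn0; apply: leq_trans (nlt_bound B) _; have := card_lohi B; rewrite h; nia. Qed.

Lemma nlt_ge1 (A : {set T}) p q : p \in A -> q \in A -> lt le p q -> 1 <= nlt le A.
Proof. by move=> pA qA h; apply/card_gt0P; exists (p, q); rewrite inE /= pA qA h. Qed.

Lemma nlt_ge2 (A : {set T}) p q1 q2 : p \in A -> q1 \in A -> q2 \in A -> q1 != q2 ->
  lt le p q1 -> lt le p q2 -> 2 <= nlt le A.
Proof.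
move=> pA q1A q2A nq h1 h2; apply/card_gt1P; exists (p, q1), (p, q2).
by rewrite !inE /= pA q1A q2A h1 h2 /= xpair_eqE negb_and nq orbT.
Qed.

End H2.
Definition i0 : 'I_3 := @Ordinal 3 0 isT.
Definition i1 : 'I_3 := @Ordinal 3 1 isT.
Definition i2 : 'I_3 := @Ordinal 3 2 isT.
Lemma ord3P (i : 'I_3) : [\/ i = i0, i = i1 | i = i2].
Proof.
case: i => [[|[|[|m]]] H]; [apply: Or31|apply: Or32|apply: Or33|by []]; exact: val_inj.
Qed.

Lemma set3P (T : finType) (x y z t : T) : reflect [\/ t = x, t = y | t = z] (t \in [set x; y; z]).
Proof.
rewrite !inE; apply: (iffP idP).
- by case/orP => [/orP[]|] /eqP ->; [apply: Or31|apply: Or32|apply: Or33].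
- by case=> ->; rewrite eqxx ?orbT.
Qed.

Section VGen.
Variables (T : finType) (le : rel T).
Hypothesis Hpo : poset_ax le.
Variable hi : T -> bool.
Hypothesis Hhi : forall p q, lt le p q -> ~~ hi p && hi q.
Hypothesis Hhi2 : forall t, hi t -> exists l, lt le l t.

Lemma inSigma (s : {perm T}) t : (t \in Sigma s) = (s t != t).
Proof. by rewrite inE. Qed.

Lemma vgen_struct s S : generator_fam le leV [set: 'I_3] 2 s S ->
  exists x y z, [/\ S 0 = [set x; y; z], S 1 = [set s t | t in S 0],
     lt le x y, lt le x z & y != z] /\
   [/\ ~~ hi x, hi y, hi z, isAut le s & s x != x] /\
   [/\ s (s x) = x,
      (forall l, ~~ hi l -> l != x -> l != s x -> s l = l) &
      (forall u, hi u -> s u != u -> u \in [set y; z; s y; s z])].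
Proof.
case=> _ hs [Hmo [Him Hcov]] Hiso _.
have [h [hinj [himg hle]]] := Hiso 0 isT.
have : i0 \in [set h x | x in S 0] by rewrite himg inE.
case/imsetP => x xS hx.
have : i1 \in [set h x | x in S 0] by rewrite himg inE.
case/imsetP => y yS hy.
have : i2 \in [set h x | x in S 0] by rewrite himg inE.
case/imsetP => z zS hz.
have lxy : lt le x y.
  rewrite /lt -hle // -hx -hy andbT; apply/eqP => e; subst y; by rewrite -hx in hy.
have lxz : lt le x z.
  rewrite /lt -hle // -hx -hz andbT; apply/eqP => e; subst z; by rewrite -hx in hz.
have nyz : y != z by apply/eqP => e; subst z; by rewrite -hy in hz.
have S0E : S 0 = [set x; y; z].
  apply/setP => t; apply/idP/idP => [tS|]; last by case/set3P => ->.
  rewrite !inE; case: (ord3P (h t)) => e.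
  - by rewrite (hinj t x) ?eqxx // -hx e.
  - by rewrite (hinj t y) ?eqxx ?orbT // -hy e.
  - by rewrite (hinj t z) ?eqxx ?orbT // -hz e.
have S1E : S 1 = [set s t | t in S 0] by rewrite (Him 0 isT).
have S0E' : S 0 = [set s t | t in S 1] by rewrite (Him 1 isT).
have /andP[lx hy'] := Hhi lxy.
have /andP[_ hz'] := Hhi lxz.
have hS : forall t, hi (s t) = hi t by move=> t; apply: (aut_hi Hhi Hhi2).
have inS : forall t, s t != t -> t \in S 0 \/ t \in S 1.
  move=> t nt; have : t \in Sigma s by rewrite inSigma.
  case/Hcov => i; case: i => [|[|//]] _ ?; by [left|right].
have sxS1 : s x \in S 1 by rewrite S1E; apply: imset_f.
have sxx : s x != x by rewrite -inSigma; apply/Hcov; exists 0.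
exists x, y, z; split; first by [].
split; first by [].
split.
- have : s (s x) \in S 0 by rewrite S0E'; apply: imset_f.
  rewrite S0E => /set3P[//|e|e].
  + by move: (hS (s x)); rewrite e hy' hS (negbTE lx).
  + by move: (hS (s x)); rewrite e hz' hS (negbTE lx).
- move=> l hl nlx nlsx; apply/eqP/negPn/negP => nl.
  case: (inS _ nl) => [|].
  + rewrite S0E => /set3P[] e; subst l.
    * by rewrite eqxx in nlx.
    * by rewrite hy' in hl.
    * by rewrite hz' in hl.
  + rewrite S1E => /imsetP [t tS e]; subst l.
    move: tS; rewrite S0E => /set3P[] e; subst t.
    * by rewrite eqxx in nlsx.
    * by rewrite hS hy' in hl.
    * by rewrite hS hz' in hl.
- move=> u hu nu; case: (inS _ nu) => [|].
  + rewrite S0E => /set3P[] e; subst u.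
    * by rewrite (negbTE lx) in hu.
    * by rewrite !inE eqxx ?orbT.
    * by rewrite !inE eqxx ?orbT.
  + rewrite S1E => /imsetP [t tS e]; subst u.
    move: tS; rewrite S0E => /set3P[] e; subst t.
    * by rewrite hS (negbTE lx) in hu.
    * by rewrite !inE eqxx ?orbT.
    * by rewrite !inE eqxx ?orbT.
Qed.

End VGen.
Lemma clos_mono (T : Type) (R R' : T -> T -> Prop) a b :
  (forall a b, R a b -> R' a b) -> clos_refl_sym_trans T R a b -> clos_refl_sym_trans T R' a b.
Proof.
move=> H; elim=> [x y /H|x|x y _ IH|x y z _ IH1 _ IH2].
- by apply: rst_step.
- exact: rst_refl.
- exact: rst_sym.
- exact: rst_trans IH1 IH2.
Qed.

Section Fwd.
Variables (T : finType) (le : rel T).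
Hypothesis Hpo : poset_ax le.
Variable f : T -> 'I_2.
Hypothesis Hsurj : forall u, exists x, f x = u.
Hypothesis Heqv : forall x y, f x = f y <-> symrel_prime le leV [set: 'I_3] 2 x y.
Hypothesis Hord : forall u v, leC2 u v <-> exists x y, [/\ f x = u, f y = v & le x y].
Hypothesis HnC2 : ~ iso_sub le [set: T] leC2 [set: 'I_2].

Notation SP := (symrel_prime le leV [set: 'I_3] 2).
Notation pok := (prime_ok le leV [set: 'I_3] 2).
Definition hi t := val (f t) == 1.

Lemma SP_aut x y : SP x y -> autrel le x y.
Proof. by apply: autrel_clos => a b; apply: R1_autrel. Qed.

Lemma feq_aut x y : f x = f y -> autrel le x y.
Proof. by move/Heqv/SP_aut. Qed.

Lemma Hhi p q : lt le p q -> ~~ hi p && hi q.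
Proof.
move=> hpq; have nf : f p != f q.
  apply/eqP => /feq_aut [g hg e]; subst q.
  by move: (no_lt_aut Hpo p hg); rewrite hpq.
have : leC2 (f p) (f q) by apply/Hord; exists p, q; split => //; exact: lt_le.
rewrite /leC2 /hi; move: nf; case: (f p) => [a ha]; case: (f q) => [b hb] /=.
move=> nab hab; have : a != b by apply: contra nab => /eqP e; apply/eqP/val_inj.
lia.
Qed.

Lemma Hhi2 t : hi t -> exists l, lt le l t.
Proof.
move=> ht.
have [x0 [y0 [hx0 hy0 l0]]] : exists x y, [/\ f x = ord0, f y = ord_max & le x y].
  by apply/Hord.
have : f y0 = f t by apply: val_inj; rewrite hy0; move: ht; rewrite /hi => /eqP ->.
case/feq_aut => g hg <-; exists (g x0); rewrite aut_lt //.
rewrite /lt l0 andbT; apply/eqP => e; subst y0; by rewrite hx0 in hy0.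
Qed.

Lemma aut_hiF g t : isAut le g -> hi (g t) = hi t.
Proof. exact: (aut_hi Hhi Hhi2). Qed.

Lemma lo_anti l1 l2 : ~~ hi l2 -> le l1 l2 -> l1 = l2.
Proof.
move=> h2 h; apply/eqP/negPn/negP => n.
by have /andP[_ ] := Hhi (lt_of_le h n); rewrite (negbTE h2).
Qed.

Lemma hi_max u t : hi u -> le u t -> u = t.
Proof.
move=> h1 h; apply/eqP/negPn/negP => n.
by have /andP[] := Hhi (lt_of_le h n); rewrite h1.
Qed.

Lemma hiE t : hi t = (f t == ord_max).
Proof. by rewrite /hi; apply/eqP/eqP => [e|->//]; apply: val_inj. Qed.

Lemma same_f a b : hi a = hi b -> f a = f b.
Proof.
move=> e; apply: val_inj; move: e; rewrite /hi.
case: (f a) => [x hx]; case: (f b) => [y hy] /=; case: eqP; case: eqP; lia.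
Qed.

Definition pgen s S := generator_fam le leV [set: 'I_3] 2 s S /\ pok s.

Lemma R1_pgen a b : R1_by le leV pok [set: 'I_3] 2 a b ->
  exists s S, [/\ pgen s S, s a != a & s b != b].
Proof.
case=> s [S [i [j [q [[hg ok hi hj _] [ha -> hb _ _]]]]]].
case: (hg) => _ _ [_ [_ Hcov]] _ _.
exists s, S; split => //.
- by rewrite -inSigma; apply/Hcov; exists i.
- by rewrite -inSigma; apply/Hcov; exists j.
Qed.

Lemma ex_pgen : exists s S, pgen s S.
Proof.
case: (boolP [exists a, exists b, (a != b) && (f a == f b)]) =>
  [/existsP [a /existsP [b /andP [nab /eqP fab]]] | /existsPn H].
- have := (Heqv a b).1 fab => hsp.
  have [c [hc|hc]] := first_step hsp (elimN eqP nab).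
  + by have [s [S [hs _ _]]] := R1_pgen hc; exists s, S.
  + by have [s [S [hs _ _]]] := R1_pgen hc; exists s, S.
- have finj : injective f.
    move=> a b e; apply/eqP/negPn/negP => nab.
    by move: (existsPn (H a) b); rewrite nab e eqxx.
  exfalso; apply: HnC2; exists f; split; first by move=> a b _ _; apply: finj.
  split.
  + apply/setP => u; rewrite inE; case: (Hsurj u) => x <-; apply: imset_f; by rewrite inE.
  + move=> x y _ _; apply/idP/idP => [/Hord [x0 [y0 [e1 e2 l]]]|l].
    * by rewrite -(finj _ _ e1) -(finj _ _ e2).
    * by apply/Hord; exists x, y.
Qed.


Definition vstruct s S := @vgen_struct T le hi Hhi Hhi2 s S.

Lemma moved_by_pgen w : exists s S, pgen s S /\ s w != w.
Proof.
have [s0 [S0 [hg0 _]]] := ex_pgen.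
have [x [y [z [[_ _ lxy lxz nyz] [[lx hy hz hs sxx] _]]]]] := vstruct hg0.
have [w' [nww fww]] : exists w', w != w' /\ f w = f w'.
  case hw: (hi w).
  - case: (eqVneq w y) => [->|nwy].
    + by exists z; split => //; apply: same_f; rewrite hy hz.
    + by exists y; split => //; apply: same_f; rewrite hw hy.
  - case: (eqVneq w x) => [->|nwx].
    + exists (s0 x); split; first by rewrite eq_sym.
      by apply: same_f; rewrite aut_hiF.
    + by exists x; split => //; apply: same_f; rewrite hw (negbTE lx).
have := (Heqv w w').1 fww => hsp.
have [c [hc|hc]] := first_step hsp (elimN eqP nww).
- by have [s [S [hs' h1 _]]] := R1_pgen hc; exists s, S.
- by have [s [S [hs' _ h2]]] := R1_pgen hc; exists s, S.
Qed.

Lemma R1_weaken a b : R1_by le leV pok [set: 'I_3] 2 a b ->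
  R1_by le leV (fun _ => True) [set: 'I_3] 2 a b.
Proof.
case=> s [S [i [j [q [[h1 _ h3 h4 h5] h6]]]]].
by exists s, S, i, j, q; split.
Qed.

Lemma symset_all A : iso_sub le A leV [set: 'I_3] -> forall w, symset le leV [set: 'I_3] 2 A w.
Proof.
move=> [h [hinj [himg hle]]] w.
have : i0 \in [set h x | x in A] by rewrite himg inE.
case/imsetP => p pA hp.
have : i1 \in [set h x | x in A] by rewrite himg inE.
case/imsetP => q qA hq.
have lpq : lt le p q.
  rewrite /lt -hle // -hp -hq andbT; apply/eqP => e; subst q; by rewrite -hp in hq.
have /andP[lp hq'] := Hhi lpq.
have [s [S [[hg hok] sw]]] := moved_by_pgen w.
have adm : admissible le leV [set: 'I_3] 2 A s.
  split; first by exists S.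
  move=> b nb; exfalso; apply: nb.
  case hb: (hi b).
  - exists q => //; apply: (clos_mono R1_weaken); apply/Heqv/same_f; by rewrite hb.
  - exists p => //; apply: (clos_mono R1_weaken); apply/Heqv/same_f; by rewrite hb (negbTE lp).
exists (s * 1)%g; split; last by rewrite mulg1.
by apply: in_genM => //; apply: in_gen1.
Qed.

Lemma iso_single w : iso_sub le [set w] leV [set i0].
Proof.
exists (fun _ => i0); split; first by move=> a b /set1P -> /set1P ->.
split; first by rewrite imset_set1.
by move=> a b /set1P -> /set1P ->; rewrite (le_refl Hpo).
Qed.

Lemma twin_free u1 u2 : hi u1 -> hi u2 -> (forall l, ~~ hi l -> le l u1 = le l u2) -> u1 = u2.
Proof.
move=> h1 h2 H; apply/eqP/negPn/negP => n12.
have [s0 [S0 [hg0 [A [_ hisoA _ hcomp]]]]] := ex_pgen.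
set tau := tperm u1 u2.
have Fa : forall a, a != u1 -> a != u2 -> le a u1 = le a u2.
  move=> a na1 na2; case ha: (hi a); last by apply: H; rewrite ha.
  apply/idP/idP => l.
  - by move: na1; rewrite (hi_max ha l) eqxx.
  - by move: na2; rewrite (hi_max ha l) eqxx.
have Fb : forall b u, hi u -> b != u -> le u b = false.
  by move=> b u hu nb; apply/negP => l; move: nb; rewrite (hi_max hu l) eqxx.
have n21 : u2 != u1 by rewrite eq_sym.
have autt : isAut le tau.
  move=> a b; rewrite /tau.
  case: (tpermP u1 u2 a) => [->|->|/eqP na1 /eqP na2];
  case: (tpermP u1 u2 b) => [->|->|/eqP nb1 /eqP nb2];
  rewrite ?(le_refl Hpo) ?(Fb _ _ h1 n21) ?(Fb _ _ h2 n12) ?(Fb _ _ h1 nb1) ?(Fb _ _ h2 nb2) //.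
  - by rewrite Fa.
  - by rewrite Fa.
have SigE : Sigma tau = [set u1; u2].
  apply/setP => t; rewrite inSigma !inE /tau.
  case: (tpermP u1 u2 t) => [->|->|/eqP na1 /eqP na2].
  - by rewrite eqxx n21.
  - by rewrite eqxx n12 orbT.
  - by rewrite eqxx (negbTE na1) (negbTE na2).
set S2 := fun i : nat => if i == 0 then [set u1] else [set u2].
have noltU : forall p q, p \in [set u1; u2] -> q \in [set u1; u2] -> ~~ lt le p q.
  move=> p q /set2P hp _; apply/negP => /Hhi /andP[hp' _].
  by case: hp => e; subst p; [rewrite h1 in hp' | rewrite h2 in hp'].
have ellS : ell le (Sigma tau) = 1.
  by rewrite SigE; apply: (ell_eq1 Hpo) => //; exists u1; rewrite !inE eqxx.
have famok : fam_ok le tau 2 S2.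
  split; last split.
  - move=> i hi2; have [w [Sw wS]] : exists w, S2 i = [set w] /\ w \in Sigma tau.
      by rewrite SigE /S2; case: (i == 0); [exists u1|exists u2]; rewrite !inE eqxx ?orbT.
    rewrite Sw; split.
    + split; first by rewrite sub1set.
      move=> B _; rewrite cards1 => hB; by rewrite (nlt_le1 Hhi hB).
    + rewrite ellS; apply: (ell_eq1 Hpo); first by exists w; rewrite inE.
      by move=> p q /set1P -> /set1P ->; exact: lt_irr.
  - move=> i; case: i => [|[|//]] _; rewrite /S2 /= imset_set1 /tau.
    + by rewrite tpermL.
    + by rewrite tpermR.
  - move=> t; rewrite SigE; split.
    + by case/set2P => ->; [exists 0 | exists 1]; rewrite /S2 /= ?inE.
    + by case=> i; case: i => [|[|//]] _; rewrite /S2 /= => /set1P ->; rewrite !inE eqxx ?orbT.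
have gen : generator_fam le leV [set i0] 2 tau S2.
  split => //.
  - by move=> i _; rewrite /S2; case: (i == 0); apply: iso_single.
  - move=> S3 [_ [Him Hcov]]; rewrite /S2 /= cards1 card_gt0; apply/negP => /eqP e.
    have : u1 \in Sigma tau by rewrite SigE !inE eqxx.
    case/Hcov => i; case: i => [|[|//]] _.
    + by rewrite e inE.
    + by rewrite -(Him 0 isT) e imset0 inE.
have adm : admissible le leV [set i0] 2 [set u1] tau.
  split; first by exists S2.
  move=> b nb; rewrite /tau; case: (tpermP u1 u2 b) => [e|e|//]; subst b; exfalso; apply: nb.
  - by exists u1; [rewrite inE | apply: rst_refl].
  - exists u1; first by rewrite inE.
    apply: rst_step; exists tau, S2, 0, 1, 1; split; split => //.
    + rewrite /S2 /=; apply/eqP => e; have : u1 \in [set u2] by rewrite -e inE.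
      by rewrite inE (negbTE n12).
    + by rewrite /S2 inE.
    + by rewrite /= /tau tpermL.
    + by rewrite /S2 inE.
apply: hcomp; exists [set i0], 2, (symset le leV [set i0] 2 [set u1]); split => //.
- exists [set u1]; split => //; last exact: iso_single.
  by move=> a b /set1P -> /set1P ->; rewrite (negbTE (lt_irr _ _)).
- exists u1; exists (tau * 1)%g; split; first by apply: in_genM => //; apply: in_gen1.
  by rewrite mulg1 /tau tpermL.
- by move=> x _; apply: symset_all.
- left; rewrite properT; apply/eqP => e.
  have : i1 \in [set i0] by rewrite e inE.
  by rewrite inE => /eqP/(congr1 val).
Qed.


Lemma pgen_invol s S : pgen s S -> forall t, s (s t) = t.
Proof.
case=> hg _. have [x [y [z [[_ _ lxy lxz nyz] [[lx hy hz hs sxx] [ssx fixL movU]]]]]] := vstruct hg.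
have lowinv : forall l, ~~ hi l -> s (s l) = l.
  move=> l hl; case: (eqVneq l x) => [->//|nlx]; case: (eqVneq l (s x)) => [->|nlsx]; first by rewrite ssx.
  by rewrite (fixL l) // (fixL l).
move=> t; case ht: (hi t); last by apply: lowinv; rewrite ht.
apply: twin_free.
- by rewrite aut_hiF // aut_hiF.
- by [].
- move=> l hl. rewrite -{1}(lowinv l hl). by rewrite hs hs.
Qed.

Definition Sw a b := exists g, [/\ isAut le g, g a = b, g b = a &
   forall l, ~~ hi l -> l != a -> l != b -> g l = l].

Lemma Sw_trans a b c : ~~ hi a -> ~~ hi c -> Sw a b -> Sw b c -> a != c -> Sw a c.
Proof.
move=> ha hc [g1 [h1 e1a e1b f1]] [g2 [h2 e2b e2c f2]] nac.
case: (eqVneq a b) => [eab|nab].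
  by rewrite eab; exists g2; split.
case: (eqVneq b c) => [ebc|nbc].
  by rewrite -ebc; exists g1; split.
have nca : c != a by rewrite eq_sym.
have g2a : g2 a = a by apply: f2; rewrite // eq_sym.
have g1c : g1 c = c by apply: f1; rewrite // eq_sym.
exists (g2 * g1 * g2)%g; split.
- by apply: isAutM => //; apply: isAutM.
- by rewrite !permM g2a e1a e2b.
- by rewrite !permM e2c e1b g2a.
- move=> l hl nla nlc; rewrite !permM.
  case: (eqVneq l b) => [->|nlb].
  + by rewrite e2b g1c e2c.
  + by rewrite (f2 l) // (f1 l) // (f2 l).
Qed.

Lemma Sw_sym a b : Sw a b -> Sw b a.
Proof. by case=> g [h1 h2 h3 h4]; exists g; split => // l hl n1 n2; apply: h4. Qed.

Lemma R1_Sw a b : ~~ hi a -> R1_by le leV pok [set: 'I_3] 2 a b -> Sw a b.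
Proof.
move=> ha [s [S [i [j [q [[hg hok hi2 hj _] [hai eb hbj q1 q2]]]]]]].
have hp : pgen s S by [].
have qE : q = 1 by lia.
subst q b => /=.
have [x [y [z [[_ _ lxy lxz nyz] [[lx hy hz hs sxx] [ssx fixL movU]]]]]] := vstruct hg.
case: hg => _ _ [_ [_ Hcov]] _ _.
have sa : s a != a by rewrite -inSigma; apply/Hcov; exists i.
have inv := pgen_invol hp.
have ax : a = x \/ a = s x.
  case: (eqVneq a x) => [|nax]; first by left.
  case: (eqVneq a (s x)) => [|nasx]; first by right.
  by move: sa; rewrite fixL // eqxx.
exists s; split => //.
move=> l hl nla nlsa; apply: fixL => //; case: ax => e; subst a => //.
by rewrite inv in nlsa.
Qed.

Lemma Sw_all a b : ~~ hi a -> ~~ hi b -> a != b -> Sw a b.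
Proof.
move=> ha hb nab.
have hsp := (Heqv a b).1 (same_f (etrans (negbTE ha) (esym (negbTE hb)))).
have key : forall x y, SP x y -> hi x = hi y /\ (~~ hi x -> x = y \/ Sw x y).
  move=> x y; elim=> {x y} [x y hR|x|x y _ [e h]|x y z _ [e1 h1] _ [e2 h2]].
  - split; first by have [g hg <-] := R1_autrel hR; rewrite aut_hiF.
    by move=> hx; right; apply: R1_Sw.
  - by split => //; left.
  - split => // hy; have := h; rewrite e => /(_ hy) [->|/Sw_sym]; by [left|right].
  - split; first by rewrite e1.
    move=> hx; have hy : ~~ hi y by rewrite -e1.
    have hz : ~~ hi z by rewrite -e2.
    case: (eqVneq x z) => [->|nxz]; first by left.
    right; case: (h1 hx) => [exy|sxy]; case: (h2 hy) => [eyz|syz].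
    + by move: nxz; rewrite exy eyz eqxx.
    + by rewrite exy.
    + by rewrite -eyz.
    + exact: Sw_trans sxy syz nxz.
by case: (key a b hsp) => _ /(_ ha) [e|//]; move: nab; rewrite e eqxx.
Qed.

Definition swp (a c l : T) : T := if l == a then c else if l == c then a else l.

Lemma exch u a c : hi u -> ~~ hi a -> ~~ hi c -> a != c ->
  exists u', hi u' /\ forall l, ~~ hi l -> le l u' = le (swp a c l) u.
Proof.
move=> hu ha hc nac; have [g [hg ga gc gf]] := Sw_all ha hc nac.
exists (g u); split; first by rewrite aut_hiF.
have gsw : forall l, ~~ hi l -> g (swp a c l) = l.
  move=> l hl; rewrite /swp; case: ifP => [/eqP ->|nla]; first by rewrite gc.
  case: ifP => [/eqP ->|nlc]; first by rewrite ga.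
  by rewrite gf // ?nla ?nlc.
by move=> l hl; rewrite -{1}(gsw l hl) hg.
Qed.

Lemma set4P (T' : finType) (x y z w t : T') :
  reflect [\/ t = x, t = y, t = z | t = w] (t \in [set x; y; z; w]).
Proof.
rewrite !inE; apply: (iffP idP).
- by case/orP => [/orP[/orP[]|]|] /eqP ->; [apply: Or41|apply: Or42|apply: Or43|apply: Or44].
- by case=> ->; rewrite eqxx ?orbT.
Qed.

Definition Dn2 u p q := forall l, ~~ hi l -> le l u = (l == p) || (l == q).

Lemma exch2 u p q c : hi u -> Dn2 u p q -> ~~ hi p -> ~~ hi c -> p != q -> c != p -> c != q ->
  exists u', hi u' /\ Dn2 u' c q.
Proof.
move=> hu hD hp hc npq ncp ncq; have npc : p != c by rewrite eq_sym.
have [u' [hu' hl]] := exch hu hp hc npc.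
exists u'; split => // l hl'; rewrite hl //.
have hsw : ~~ hi (swp p c l) by rewrite /swp; case: ifP => _ //; case: ifP.
rewrite (hD _ hsw) /swp; case: (eqVneq l p) => [->|nlp].
  by rewrite (negbTE ncp) (negbTE ncq) (negbTE npc) (negbTE npq).
case: (eqVneq l c) => [->|nlc]; first by rewrite eqxx.
by rewrite (negbTE nlp).
Qed.

Lemma Dn2C u p q : Dn2 u p q -> Dn2 u q p.
Proof. by move=> h l hl; rewrite h // orbC. Qed.

Lemma fwd_struct : exists x1 x2 x3 x4 : T,
  [/\ ~~ hi x1, ~~ hi x2, ~~ hi x3, ~~ hi x4 & uniq [:: x1; x2; x3; x4]] /\
  [/\ (forall l, ~~ hi l -> l \in [:: x1; x2; x3; x4]),
      (forall p q, ~~ hi p -> ~~ hi q -> p != q -> exists u, hi u /\ Dn2 u p q) &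
      (forall u, hi u -> exists p q, [/\ p != q, ~~ hi p, ~~ hi q & Dn2 u p q])].
Proof.
have [s [S hp]] := ex_pgen; have hp' := hp; case: hp => hg _.
have [x [y [z [[S0E _ lxy lxz nyz] [[lx hy hz hs sxx] [ssx fixL movU]]]]]] := vstruct hg.
case: (hg) => _ _ [_ [_ Hcov]] _ _.
have inv := pgen_invol hp'.
set x' := s x.
have lx' : ~~ hi x' by rewrite /x' aut_hiF.
have les : forall l u, le l (s u) = le (s l) u by move=> l u; rewrite -{1}(inv l) hs.
have ys : s y != y by rewrite -inSigma; apply/Hcov; exists 0 => //; rewrite S0E !inE eqxx ?orbT.
have zs : s z != z by rewrite -inSigma; apply/Hcov; exists 0 => //; rewrite S0E !inE eqxx ?orbT.
have lexy := lt_le lxy; have lexz := lt_le lxz.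
have nxx' : x != x' by rewrite /x' eq_sym.
have nx'y : ~~ le x' y.
  apply/negP => h; move/eqP: ys; apply; apply: twin_free => //; first by rewrite aut_hiF.
  move=> l hl; rewrite les; case: (eqVneq l x) => [->|nlx]; first by rewrite h lexy.
  case: (eqVneq l x') => [->|nlx']; first by rewrite /x' inv lexy h.
  by rewrite fixL.
have nx'z : ~~ le x' z.
  apply/negP => h; move/eqP: zs; apply; apply: twin_free => //; first by rewrite aut_hiF.
  move=> l hl; rewrite les; case: (eqVneq l x) => [->|nlx]; first by rewrite h lexz.
  case: (eqVneq l x') => [->|nlx']; first by rewrite /x' inv lexz h.
  by rewrite fixL.
have J3 : forall u, hi u -> le x u -> ~~ le x' u -> u = y \/ u = z.
  move=> u hu h1 h2; case: (eqVneq (s u) u) => [e|nu].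
    by move: h2; rewrite /x' -{1}e hs h1.
  case/set4P: (movU u hu nu) => e; [by left|by right| |]; subst u.
  - by move: h1; rewrite les (negbTE nx'y).
  - by move: h1; rewrite les (negbTE nx'z).
pose Dn u := [set l | ~~ hi l & le l u].
have DnE : forall g u, isAut le g -> Dn (g u) = [set g l | l in Dn u].
  move=> g u hg'; apply/setP => l; apply/idP/imsetP.
  - rewrite inE => /andP [hl hle]; exists (g^-1 l)%g; last by rewrite permKV.
    rewrite inE aut_hiF ?hl; last exact: isAutV.
    by rewrite -(hg' (g^-1 l)%g u) permKV.
  - by case=> l' + ->; rewrite !inE => /andP[h1 h2]; rewrite aut_hiF // h1 hg'.
have cardDn : forall u, hi u -> #|Dn u| = #|Dn y|.
  move=> u hu; have [g hg' <-] := feq_aut (same_f (etrans hy (esym hu))).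
  by rewrite DnE // card_imset //; apply: perm_inj.
have ndyz : ~~ (Dn y \subset Dn z).
  apply/negP => sub; move/eqP: nyz; apply; apply: twin_free => // l hl.
  have e : Dn y = Dn z by apply/eqP; rewrite eqEcard sub (cardDn z hz) leqnn.
  by move/setP: e => /(_ l); rewrite !inE hl.
have ndzy : ~~ (Dn z \subset Dn y).
  apply/negP => sub; move/eqP: nyz; apply; apply: twin_free => // l hl.
  have e : Dn z = Dn y by apply/eqP; rewrite eqEcard sub (cardDn z hz) leqnn.
  by move/setP: e => /(_ l); rewrite !inE hl.
case/subsetPn: ndyz => a; rewrite !inE => /andP[la lay] /nandP[|naz]; first by rewrite la.
case/subsetPn: ndzy => b; rewrite !inE => /andP[lb lbz] /nandP[|nby]; first by rewrite lb.
have nax : a != x by apply: contraNneq naz => ->.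
have nbx : b != x by apply: contraNneq nby => ->.
have nax' : a != x' by apply: contraNneq nx'y => <-.
have nbx' : b != x' by apply: contraNneq nx'z => <-.
have nab : a != b by apply: contraNneq nby => <-.
have swpx : forall c d, x != c -> x != d -> swp c d x = x.
  by move=> c d h1 h2; rewrite /swp (negbTE h1) (negbTE h2).
have swpx' : forall c d, x' != c -> x' != d -> swp c d x' = x'.
  by move=> c d h1 h2; rewrite /swp (negbTE h1) (negbTE h2).
have Ez : forall l, ~~ hi l -> le l z = le (swp a b l) y.
  have [u1 [hu1 H1]] := exch hy la lb nab.
  have : u1 = y \/ u1 = z.
    apply: J3 => //.
    - by rewrite H1 // swpx // eq_sym.
    - by rewrite H1 // swpx' // eq_sym.
  case=> e; subst u1.
  - by move: (H1 b lb); rewrite /swp eq_sym (negbTE nab) eqxx lay (negbTE nby).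
  - exact: H1.
have Dy : forall l, ~~ hi l -> le l y -> l = x \/ l = a.
  move=> l hl hly; case: (eqVneq l x) => [|nlx]; first by left.
  case: (eqVneq l a) => [|nla]; first by right.
  exfalso.
  have nlb : l != b by apply: contraNneq nby => <-.
  have nlx' : l != x' by apply: contraNneq nx'y => <-.
  have [u2 [hu2 H2]] := exch hy hl lb nlb.
  have : u2 = y \/ u2 = z.
    apply: J3 => //.
    - by rewrite H2 // swpx // eq_sym.
    - by rewrite H2 // swpx' // eq_sym.
  case=> e; subst u2.
  - by move: (H2 b lb); rewrite /swp eq_sym (negbTE nlb) eqxx hly (negbTE nby).
  - move: (H2 a la); rewrite /swp (negbTE nab) eq_sym (negbTE nla) lay.
    by rewrite (negbTE naz).
have Dz : forall l, ~~ hi l -> le l z -> l = x \/ l = b.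
  move=> l hl; rewrite Ez // /swp; case: (eqVneq l a) => [->|nla] /=.
    by rewrite (negbTE nby).
  case: (eqVneq l b) => [->|nlb] /=; first by right.
  by move/(Dy l hl) => [->|e]; [left | move: nla; rewrite e eqxx].
have nxa : x != a by rewrite eq_sym.
have nxb : x != b by rewrite eq_sym.
have nx'a : x' != a by rewrite eq_sym.
have nx'b : x' != b by rewrite eq_sym.
have lowE : forall c, ~~ hi c -> c \in [:: x; x'; a; b].
  move=> c hc; rewrite !inE.
  case: (eqVneq c x) => // ncx; case: (eqVneq c x') => // ncx'.
  case: (eqVneq c a) => // nca; case: (eqVneq c b) => // ncb /=.
  have nac : a != c by rewrite eq_sym.
  have [u3 [hu3 H3]] := exch hy la hc nac.
  have : u3 = y \/ u3 = z.
    apply: J3 => //.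
    - by rewrite H3 // swpx // eq_sym.
    - by rewrite H3 // swpx' // eq_sym.
  have hcu : le c u3 by rewrite H3 // /swp (negbTE nca) eqxx.
  case=> e; subst u3.
  - by case: (Dy c hc hcu) => e; [move: ncx | move: nca]; rewrite e eqxx.
  - by case: (Dz c hc hcu) => e; [move: ncx | move: ncb]; rewrite e eqxx.
have Dy2 : Dn2 y x a.
  move=> l hl; apply/idP/idP => [/(Dy l hl) [->|->]|/orP[/eqP->|/eqP->]] //.
  - by rewrite eqxx.
  - by rewrite eqxx orbT.
exists x, x', a, b; split.
  split => //; rewrite /= !inE !negb_or.
  by rewrite nxx' nxa nxb nx'a nx'b nab.
split => //.
- move=> p q hp hq npq.
  have [u1 [w [hu1 hw npw Hu1]]] : exists u1 w, [/\ hi u1, ~~ hi w, p != w & Dn2 u1 p w].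
    case: (eqVneq p x) => [->|npx]; first by exists y, a; split.
    case: (eqVneq p a) => [->|npa]; first by exists y, x; split => //; rewrite ?(eq_sym a x) //; apply: Dn2C.
    have [u1 [hu1 H1]] := exch2 hy Dy2 lx hp nxa npx npa.
    by exists u1, a; split.
  case: (eqVneq q w) => [->|nqw]; first by exists u1.
  have nwp : w != p by rewrite eq_sym.
  have nqp : q != p by rewrite eq_sym.
  have [u2 [hu2 H2]] := exch2 hu1 (Dn2C Hu1) hw hq nwp nqw nqp.
  by exists u2; split => //; apply: Dn2C.
- move=> u hu; have [g hg' <-] := feq_aut (same_f (etrans hy (esym hu))).
  exists (g x), (g a); split.
  + by rewrite (inj_eq perm_inj).
  + by rewrite aut_hiF.
  + by rewrite aut_hiF.
  + move=> l hl; rewrite -{1}(permKV g l) hg' Dy2; last by rewrite aut_hiF //; apply: isAutV.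
    have E : forall t, ((g^-1)%g l == t) = (l == g t).
      by move=> t; apply/eqP/eqP => [<-|->]; rewrite ?permKV ?permK.
    by rewrite !E.
Qed.

Lemma fwd_iso : iso_sub le [set: T] leS S3_01.
Proof.
have [x1 [x2 [x3 [x4 [[h1 h2 h3 h4 hu] [lowE all2 highs]]]]]] := fwd_struct.
pose xs := [:: x1; x2; x3; x4].
pose einv (i : 'I_4) := nth x1 xs i.
pose e (t : T) : 'I_4 := if t == x1 then inord 0 else if t == x2 then inord 1
  else if t == x3 then inord 2 else inord 3.
move: hu; rewrite /= !inE !negb_or => /andP[/and3P[n12 n13 n14] /andP[/andP[n23 n24] /andP[n34 _]]].
have ex1 : e x1 = inord 0 by rewrite /e eqxx.
have ex2 : e x2 = inord 1 by rewrite /e eq_sym (negbTE n12) eqxx.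
have ex3 : e x3 = inord 2 by rewrite /e eq_sym (negbTE n13) eq_sym (negbTE n23) eqxx.
have ex4 : e x4 = inord 3 by rewrite /e eq_sym (negbTE n14) eq_sym (negbTE n24) eq_sym (negbTE n34).
have einvK : forall l, ~~ hi l -> einv (e l) = l.
  move=> l hl; have := lowE l hl; rewrite !inE => /or4P[] /eqP ->;
  by rewrite ?ex1 ?ex2 ?ex3 ?ex4 /einv inordK.
have einv_lo : forall i, ~~ hi (einv i).
  by move=> [[|[|[|[|//]]]] H]; rewrite /einv.
have eK : forall i, e (einv i) = i.
  by move=> [[|[|[|[|//]]]] H]; rewrite /einv /= ?ex1 ?ex2 ?ex3 ?ex4; apply: val_inj; rewrite /= inordK.
pose phi t := if hi t then [set i | le (einv i) t] else [set e t].
have eeq : forall l m, ~~ hi l -> ~~ hi m -> (e l == e m) = (l == m).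
  by move=> l m hl hm; apply/eqP/eqP => [h|->//]; rewrite -(einvK l) // h einvK.
have einv_eq : forall i p, ~~ hi p -> (einv i == p) = (i == e p).
  by move=> i p hp; apply/eqP/eqP => [<-|->]; [rewrite eK | rewrite einvK].
have phiH : forall u p q, hi u -> Dn2 u p q -> ~~ hi p -> ~~ hi q -> phi u = [set e p; e q].
  move=> u p q hu' hD hp hq; rewrite /phi hu'; apply/setP => i.
  by rewrite !inE hD ?einv_lo // !einv_eq.
have card_phi : forall t, #|phi t| = (if hi t then 2 else 1).
  move=> t; case ht: (hi t); last by rewrite /phi ht cards1.
  have [p [q [npq hp hq hD]]] := highs t ht.
  by rewrite (phiH _ _ _ ht hD hp hq) cards2 eeq // npq.
have le_phi : forall l u, ~~ hi l -> hi u -> le l u = (e l \in phi u).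
  by move=> l u hl hu'; rewrite /phi hu' inE einvK.
have phi_inj_hi : forall u1 u2, hi u1 -> hi u2 -> phi u1 = phi u2 -> u1 = u2.
  move=> u1 u2 hu1 hu2 E; apply: twin_free => // l hl.
  by rewrite !le_phi // E.
exists phi; split.
  move=> t1 t2 _ _ e12; case k1: (hi t1); case k2: (hi t2).
  - exact: phi_inj_hi.
  - by have := card_phi t1; rewrite e12 !card_phi k1 k2.
  - by have := card_phi t1; rewrite e12 !card_phi k1 k2.
  - by move: e12; rewrite /phi k1 k2 => /set1_inj; rewrite -{2}(einvK t1) ?k1 // => ->; rewrite einvK ?k2.
split.
  apply/setP => X; rewrite /S3_01 inE; apply/imsetP/idP.
  - by case=> t _ ->; rewrite card_phi; case: (hi t).
  - case/andP => c0 c2; have : #|X| = 1 \/ #|X| = 2 by lia.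
    case=> hc.
    + move/eqP: hc => /cards1P [i ->]; exists (einv i); first by rewrite inE.
      by rewrite /phi (negbTE (einv_lo i)) eK.
    + move/eqP: hc => /cards2P [i [j [nij ->]]].
      have nij' : einv i != einv j by apply: contra nij => /eqP h; rewrite -(eK i) h eK.
      have [u [hu' hD]] := all2 _ _ (einv_lo i) (einv_lo j) nij'.
      by exists u; rewrite ?inE // (phiH _ _ _ hu' hD) ?einv_lo // !eK.
move=> t1 t2 _ _; rewrite /leS; case k1: (hi t1); case k2: (hi t2).
- apply/idP/idP => [sub|l].
  + have E : phi t1 = phi t2 by apply/eqP; rewrite eqEcard sub !card_phi k1 k2.
    by rewrite (phi_inj_hi _ _ k1 k2 E) (le_refl Hpo).
  + by rewrite (hi_max k1 l).
- apply/idP/idP => [/subset_leq_card|l]; first by rewrite !card_phi k1 k2.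
  by move: k2; rewrite -(hi_max k1 l) k1.
- by rewrite le_phi ?k1 // {1}/phi k1 sub1set.
- rewrite /phi k1 k2 sub1set inE eeq ?k1 ?k2 //; apply/eqP/idP => [->|l].
  + exact: le_refl.
  + by apply: lo_anti; rewrite ?k2.
Qed.
End Fwd.

Lemma cards3 (T : finType) (a b c : T) : a != b -> a != c -> b != c -> #|[set a; b; c]| = 3.
Proof.
move=> nab nac nbc; rewrite setUC cardsU1 cards2 nab !inE negb_or.
by rewrite eq_sym nac eq_sym nbc.
Qed.

Section Build.
Variables (T : finType) (le : rel T).
Hypothesis Hpo : poset_ax le.
Variable hi : T -> bool.
Hypothesis Hhi : forall p q, lt le p q -> ~~ hi p && hi q.

Lemma linked_h2 (A : {set T}) : linked le A.
Proof.
move=> a b _ _ hab; left; rewrite /covers hab /=; apply/forallP => c; apply/negP => /andP[h1 h2].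
by have /andP[_ hc] := Hhi h1; have /andP[hc' _] := Hhi h2; rewrite hc in hc'.
Qed.

Definition Vshape x y z := [/\ lt le x y, lt le x z, y != z, ~~ le y z & ~~ le z y].

Lemma iso_V x y z : Vshape x y z -> iso_sub le [set x; y; z] leV [set: 'I_3].
Proof.
move=> [lxy lxz nyz nlyz nlzy].
have nxy := lt_neq lxy; have nxz := lt_neq lxz.
have lyx : le y x = false by apply/negP => h; move: (lt_asym Hpo lxy); rewrite /lt h andbT eq_sym nxy.
have lzx : le z x = false by apply/negP => h; move: (lt_asym Hpo lxz); rewrite /lt h andbT eq_sym nxz.
pose h t := if t == x then i0 else if t == y then i1 else i2.
have hx : h x = i0 by rewrite /h eqxx.
have hy : h y = i1 by rewrite /h eq_sym (negbTE nxy) eqxx.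
have hz : h z = i2 by rewrite /h eq_sym (negbTE nxz) eq_sym (negbTE nyz).
exists h; split.
  move=> a b /set3P ha /set3P hb.
  by case: ha => ->; case: hb => ->; rewrite ?hx ?hy ?hz.
split.
  apply/setP => i; rewrite inE; apply/imsetP; case: (ord3P i) => ->.
  - by exists x; rewrite ?hx // !inE eqxx.
  - by exists y; rewrite ?hy // !inE eqxx ?orbT.
  - by exists z; rewrite ?hz // !inE eqxx ?orbT.
move=> a b /set3P ha /set3P hb.
case: ha => ->; case: hb => ->; rewrite ?hx ?hy ?hz ?(le_refl Hpo) ?(lt_le lxy) ?(lt_le lxz) //.
- by rewrite (negbTE nlyz).
- by rewrite (negbTE nlzy).
Qed.

Lemma vgen_build (g : {perm T}) x y z x' y' z' :
  isAut le g -> Vshape x y z -> Vshape x' y' z' ->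
  [set g t | t in [set x; y; z]] = [set x'; y'; z'] ->
  [set g t | t in [set x'; y'; z']] = [set x; y; z] ->
  Sigma g = [set x; y; z] :|: [set x'; y'; z'] ->
  [set x; y; z] :&: [set x'; y'; z'] = set0 ->
  generator_fam le leV [set: 'I_3] 2 g
    (fun n => if n == 0 then [set x; y; z] else [set x'; y'; z']).
Proof.
move=> hg V0 V1 im0 im1 SigE disj.
set S0 := [set x; y; z]; set S1 := [set x'; y'; z'].
have c3 : forall a b c, Vshape a b c -> #|[set a; b; c]| = 3.
  by move=> a b c [l1 l2 n _ _]; rewrite cards3 ?(lt_neq l1) ?(lt_neq l2).
have cS : #|S0 :|: S1| = 6 by rewrite cardsU disj cards0 c3 // c3.
have part : forall a b c, Vshape a b c -> [set a; b; c] \subset Sigma g ->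
    max_ordered le [set a; b; c] (Sigma g) /\ ell le [set a; b; c] = ell le (Sigma g).
  move=> a b c Va sub; have [lab lac nbc _ _] := Va.
  have aS : a \in [set a; b; c] by rewrite !inE eqxx.
  have bS : b \in [set a; b; c] by rewrite !inE eqxx ?orbT.
  have cS' : c \in [set a; b; c] by rewrite !inE eqxx ?orbT.
  split.
  - split => // B _ hB; apply: leq_trans (nlt_le3 Hhi _) _; first by rewrite hB c3.
    exact: (nlt_ge2 aS bS cS' nbc lab lac).
  - by rewrite (ell_eq2 Hpo Hhi aS bS lab) (ell_eq2 Hpo Hhi (subsetP sub _ aS) (subsetP sub _ bS) lab).
have famok : fam_ok le g 2 (fun n => if n == 0 then S0 else S1).
  split; last split.
  - move=> i hi2; case: (i == 0); apply: part => //; rewrite SigE; [exact: subsetUl | exact: subsetUr].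
  - by move=> i; case: i => [|[|//]] _ /=.
  - move=> t; rewrite SigE inE; split.
    + by case/orP => h; [exists 0 | exists 1].
    + by case=> i; case: i => [|[|//]] _ /= h; rewrite h ?orbT.
split => //.
- by move=> i _; case: (i == 0); apply: iso_V.
- move=> S' [_ [Him Hcov]] /=.
  have e1 : #|S' 1| = #|S' 0| by rewrite -(Him 0 isT) card_imset //; apply: perm_inj.
  have : #|Sigma g| <= #|S' 0 :|: S' 1|.
    apply: subset_leq_card; apply/subsetP => t /Hcov [i]; case: i => [|[|//]] _ h; by rewrite inE h ?orbT.
  rewrite SigE cS => h; have := leq_trans h (leq_card_setU _ _); rewrite e1 c3 //; lia.
Qed.
End Build.

Lemma in_imset_perm (T : finType) (s : {perm T}) (A : {set T}) y :
  (y \in [set s x | x in A]) = ((s^-1)%g y \in A).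
Proof.
apply/imsetP/idP => [[x xA ->]|h]; first by rewrite permK.
by exists ((s^-1)%g y); rewrite ?permKV.
Qed.

Lemma ord_cover4 (i j k l m : 'I_4) : uniq [:: i; j; k; l] -> m \in [:: i; j; k; l].
Proof.
move=> u; apply/negPn/negP => nm.
have : uniq [:: m; i; j; k; l] by rewrite cons_uniq nm u.
move/card_uniqP => /= h; have := max_card (mem [:: m; i; j; k; l]).
by rewrite h card_ord.
Qed.

Lemma ord_fourth (i j k : 'I_4) : exists m, m \notin [:: i; j; k].
Proof.
apply/existsP; rewrite -negb_forall; apply/negP => /forallP H.
have : #|'I_4| <= #|[:: i; j; k]|.
  apply: subset_leq_card; apply/subsetP => m _; exact: H.
by rewrite card_ord => /leq_trans/(_ (card_size _)).
Qed.

Section Bwd.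
Variables (T : finType) (le : rel T).
Hypothesis Hpo : poset_ax le.
Variable ph : T -> {set 'I_4}.
Hypothesis Hinj : {in [set: T] &, injective ph}.
Hypothesis Himg : [set ph x | x in [set: T]] = S3_01.
Hypothesis Hle : forall x y, x \in [set: T] -> y \in [set: T] -> leS (ph x) (ph y) = le x y.

Lemma phinj : injective ph. Proof. by move=> x y; apply: Hinj; rewrite inE. Qed.
Lemma leE x y : le x y = (ph x \subset ph y). Proof. by rewrite -Hle ?inE. Qed.
Lemma phcard t : 0 < #|ph t| <= 2.
Proof. have : ph t \in S3_01 by rewrite -Himg; apply: imset_f; rewrite inE. by rewrite inE. Qed.
Lemma preim (X : {set 'I_4}) : 0 < #|X| <= 2 -> exists t, ph t = X.
Proof.
move=> h; have : X \in S3_01 by rewrite inE.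
by rewrite -Himg => /imsetP [t _ ->]; exists t.
Qed.

Definition hiB t := #|ph t| == 2.

Lemma loE t : ~~ hiB t -> exists i, ph t = [set i].
Proof.
move=> h; apply/cards1P; have := phcard t; move: h; rewrite /hiB.
case: #|ph t| => [|[|[|]]] //.
Qed.

Lemma hiEB t : hiB t -> exists i j, i != j /\ ph t = [set i; j].
Proof. by move/cards2P. Qed.

Lemma HhiB p q : lt le p q -> ~~ hiB p && hiB q.
Proof.
case/andP => npq; rewrite leE => sub.
have pr : ph p \proper ph q.
  rewrite properEneq sub andbT; apply: contra npq => /eqP e; apply/eqP; exact: phinj.
have := proper_card pr; have := phcard p; have := phcard q; rewrite /hiB; lia.
Qed.

Lemma Hhi2B t : hiB t -> exists l, lt le l t.
Proof.
case/hiEB => i [j [nij E]].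
have [l hl] : exists l, ph l = [set i] by apply: preim; rewrite cards1.
exists l; rewrite /lt leE hl E sub1set !inE eqxx andbT.
by apply/eqP => e; move: (congr1 (fun t => #|ph t|) e) => /=; rewrite hl E cards1 cards2 nij.
Qed.

Lemma le_low l u i : ph l = [set i] -> le l u = (i \in ph u).
Proof. by move=> h; rewrite leE h sub1set. Qed.

Lemma low_ex i : exists l, ph l = [set i].
Proof. by apply: preim; rewrite cards1. Qed.

Lemma low_neq l1 l2 i j : ph l1 = [set i] -> ph l2 = [set j] -> (l1 == l2) = (i == j).
Proof.
move=> h1 h2; apply/eqP/eqP => [e|e].
  have : ph l1 = ph l2 by rewrite e.
  by rewrite h1 h2 => /set1_inj.
by apply: phinj; rewrite h1 h2 e.
Qed.

Lemma edge_ex l1 l2 : ~~ hiB l1 -> ~~ hiB l2 -> l1 != l2 ->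
  exists e, [/\ hiB e, le l1 e & le l2 e].
Proof.
move=> /loE [i hi] /loE [j hj] n12.
have nij : i != j by rewrite -(low_neq hi hj).
have [e he] : exists e, ph e = [set i; j] by apply: preim; rewrite cards2 nij.
exists e; rewrite /hiB he cards2 nij (le_low _ hi) (le_low _ hj) he !inE !eqxx ?orbT.
by [].
Qed.

Lemma no3 l1 l2 l3 e : ~~ hiB l1 -> ~~ hiB l2 -> ~~ hiB l3 ->
  l1 != l2 -> l1 != l3 -> l2 != l3 -> le l1 e -> le l2 e -> le l3 e -> False.
Proof.
move=> /loE [i hi] /loE [j hj] /loE [k hk] n12 n13 n23.
rewrite (le_low _ hi) (le_low _ hj) (le_low _ hk) => hie hje hke.
have : #|[set i; j; k]| <= #|ph e|.
  apply: subset_leq_card; apply/subsetP => m /set3P [] ->; by [].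
have nij : i != j by rewrite -(low_neq hi hj).
have nik : i != k by rewrite -(low_neq hi hk).
have njk : j != k by rewrite -(low_neq hj hk).
rewrite cards3 // => h; have := phcard e => /andP [_ h2].
by have := leq_trans h h2.
Qed.

Lemma edge_uniq l1 l2 e e' : ~~ hiB l1 -> ~~ hiB l2 -> l1 != l2 -> hiB e -> hiB e' ->
  le l1 e -> le l2 e -> le l1 e' -> le l2 e' -> e = e'.
Proof.
move=> hl1 hl2 n12 he he' h1 h2 h3 h4.
have [i hi] := loE hl1; have [j hj] := loE hl2.
have nij : i != j by rewrite -(low_neq hi hj).
have E : forall f, hiB f -> le l1 f -> le l2 f -> ph f = [set i; j].
  move=> f hf a b; rewrite (le_low f hi) in a; rewrite (le_low f hj) in b.
  apply/eqP; rewrite eq_sym eqEcard cards2 nij.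
  have -> : #|ph f| = 2 by apply/eqP.
  rewrite leqnn andbT; apply/subsetP => m /set2P [] ->; by [].
apply: phinj; rewrite (E e he h1 h2); exact: esym (E e' he' h3 h4).
Qed.

Lemma fourth l1 l2 l3 : ~~ hiB l1 -> ~~ hiB l2 -> ~~ hiB l3 ->
  exists d, [/\ ~~ hiB d, d != l1, d != l2 & d != l3].
Proof.
move=> /loE [i hi] /loE [j hj] /loE [k hk].
have [m hm] := ord_fourth i j k.
have [d hd] := low_ex m.
move: hm; rewrite !inE !negb_or => /and3P [n1 n2 n3].
exists d; rewrite (low_neq hd hi) (low_neq hd hj) (low_neq hd hk) n1 n2 n3; split => //.
by rewrite /hiB hd cards1.
Qed.

Lemma cover4 a b c d l : ~~ hiB a -> ~~ hiB b -> ~~ hiB c -> ~~ hiB d -> ~~ hiB l ->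
  a != b -> a != c -> a != d -> b != c -> b != d -> c != d ->
  [\/ l = a, l = b, l = c | l = d].
Proof.
move=> /loE [i hi] /loE [j hj] /loE [k hk] /loE [m hm] /loE [n hn].
rewrite (low_neq hi hj) (low_neq hi hk) (low_neq hi hm) (low_neq hj hk) (low_neq hj hm) (low_neq hk hm).
move=> nij nik nim njk njm nkm.
have u : uniq [:: i; j; k; m] by rewrite /= !inE !negb_or nij nik nim njk njm nkm.
have := ord_cover4 n u; rewrite !inE => /or4P [] /eqP e.
- by apply: Or41; apply: phinj; rewrite hn hi e.
- by apply: Or42; apply: phinj; rewrite hn hj e.
- by apply: Or43; apply: phinj; rewrite hn hk e.
- by apply: Or44; apply: phinj; rewrite hn hm e.
Qed.

Lemma aut_hiB s t : isAut le s -> hiB (s t) = hiB t.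
Proof. exact: (aut_hi HhiB Hhi2B). Qed.

Lemma aut_fix_lows s : isAut le s -> (forall l, ~~ hiB l -> s l = l) -> s = 1%g.
Proof.
move=> hs H; apply/permP => t; rewrite perm1.
case ht: (hiB t); last by apply: H; rewrite ht.
have [i [j [nij E]]] := hiEB ht.
have [l1 h1] := low_ex i; have [l2 h2] := low_ex j.
have lo1 : ~~ hiB l1 by rewrite /hiB h1 cards1.
have lo2 : ~~ hiB l2 by rewrite /hiB h2 cards1.
have n12 : l1 != l2 by rewrite (low_neq h1 h2).
have a1 : le l1 t by rewrite (le_low _ h1) E !inE eqxx.
have a2 : le l2 t by rewrite (le_low _ h2) E !inE eqxx orbT.
apply: (edge_uniq lo1 lo2 n12) => //; first by rewrite aut_hiB.
- by rewrite -{1}(H l1 lo1) hs.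
- by rewrite -{1}(H l2 lo2) hs.
Qed.

Lemma F1 s : isAut le s -> s != 1%g -> exists p q, [/\ lt le p q, p \in Sigma s & q \in Sigma s].
Proof.
move=> hs ns.
case: (boolP [exists p, ~~ hiB p && (s p != p)]) => [/existsP [p /andP [lp mp]]|/existsPn H].
- have lsp : ~~ hiB (s p) by rewrite aut_hiB.
  have [w [lw nwp nwsp _]] := fourth lp lsp lsp.
  have npw : p != w by rewrite eq_sym.
  have [e [he pe we]] := edge_ex lp lw npw.
  exists p, e; split.
  + by rewrite /lt pe andbT; apply: contraNneq lp => ->.
  + by rewrite inSigma.
  + rewrite inSigma; apply/negP => /eqP se.
    have spe : le (s p) e by rewrite -se hs.
    have nsp : p != s p by rewrite eq_sym.
    have nsw : s p != w by rewrite eq_sym.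
    exact: (no3 lp lsp lw nsp npw nsw pe spe we).
- case/eqP: ns; apply: aut_fix_lows => // l hl.
  by have := H l; rewrite hl /= => /negPn/eqP.
Qed.

Lemma KL (B' : {set 'I_3}) r' s S : generator_fam le leV B' r' s S -> #|B'| < 3 -> s = 1%g.
Proof.
move=> [hr hs [Hmo [Him Hcov]] Hiso _] hB.
apply/eqP/negPn/negP => ns.
have [p0 [q0 [l0 p0S q0S]]] := F1 hs ns.
have ellSig : ell le (Sigma s) = 2 := ell_eq2 Hpo HhiB p0S q0S l0.
have r0 : 0 < r' by lia.
have [_ ellS0] := Hmo 0 r0.
have cS0 : #|S 0| = #|B'|.
  by have [h [hinj [himg _]]] := Hiso 0 r0; rewrite -himg card_in_imset.
have [p [q [lpq pS qS]]] : exists p q, [/\ lt le p q, p \in S 0 & q \in S 0].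
  case: (boolP [exists C : {set T}, [&& C \subset S 0, chainb le C & 1 < #|C|]]).
  - case/existsP => C /and3P [sub ch /card_gt1P [a [b [aC bC nab]]]].
    have := forallP (implyP (forallP ch a) aC) b; rewrite bC /= => /orP [h|h].
    + by exists a, b; rewrite (lt_of_le h nab) (subsetP sub _ aC) (subsetP sub _ bC).
    + by exists b, a; rewrite (lt_of_le h) ?(subsetP sub _ aC) ?(subsetP sub _ bC) // eq_sym.
  - move/existsPn => H; exfalso.
    have : ell le (S 0) <= 1.
      apply/bigmax_leqP => C /andP [sub ch]; have := H C; rewrite sub ch /=.
      by move=> h; rewrite leqNgt.
    by rewrite ellS0 ellSig.
have /andP [lp hq] := HhiB lpq.
have S0E : S 0 = [set p; q].
  apply/eqP; rewrite eq_sym eqEcard cards2 (lt_neq lpq) cS0.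
  rewrite (_ : #|B'| <= 2) ?andbT; last by lia.
  by apply/subsetP => t /set2P [] ->.
have hS : forall t, hiB (s t) = hiB t by move=> t; apply: aut_hiB.
have iter_hi : forall n t, hiB (iter n s t) = hiB t.
  by elim=> [//|n IH] t; rewrite iterS hS IH.
have orb : forall i, i < r' -> S i = [set iter i s t | t in S 0].
  elim=> [_|i IH hi]; first by apply/setP => t; apply/idP/imsetP => [h|[x h ->//]]; exists t.
  have := Him i (ltnW hi); rewrite modn_small // => <-.
  rewrite IH ?(ltnW hi) //; apply/setP => t; apply/imsetP/imsetP.
  - by case=> y /imsetP [x xS ->] ->; exists x.
  - by case=> x xS ->; exists (iter i s x); [apply: imset_f | rewrite iterS].
have inSig : forall t, s t != t -> exists n, t = iter n s p \/ t = iter n s q.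
  move=> t nt; have : t \in Sigma s by rewrite inSigma.
  case/Hcov => i hi; rewrite orb // S0E => /imsetP [x /set2P [] -> ->]; exists i.
  - by left.
  - by right.
have lowOrb : forall t, ~~ hiB t -> s t != t -> exists n, t = iter n s p.
  move=> t lt nt; have [n [e|e]] := inSig t nt; first by exists n.
  by move: lt; rewrite e iter_hi hq.
have highOrb : forall t, hiB t -> s t != t -> exists n, t = iter n s q.
  move=> t ht nt; have [n [e|e]] := inSig t nt; last by exists n.
  by move: ht; rewrite e iter_hi (negbTE lp).
have sp : s p != p by rewrite -inSigma; apply/Hcov; exists 0; rewrite ?S0E ?inE ?eqxx.
have Inv : forall w, s w = w -> forall n, le w (iter n s q) = le w q.
  move=> w sw; elim=> [//|n IH]; by rewrite iterS -{1}sw hs IH.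
have iter_inj : forall n x y, iter n s x = iter n s y -> x = y.
  by move=> n x y; rewrite -!permX => /perm_inj.
have iter_comm : forall n x, s (iter n s x) = iter n s (s x).
  by move=> n x; rewrite -iterS iterSr.
have hsa : forall a b, le (s a) (s b) = le a b := hs.
set a := s p.
have la : ~~ hiB a by rewrite hS.
have npa : p != a by rewrite eq_sym.
have hq' := hq.
case: (boolP [exists w, ~~ hiB w && (s w == w)]) => [/existsP [w /andP [lw /eqP sw]]|/existsPn Hno].
-
  have nwp : w != p by apply/eqP => e; move: sp; rewrite -e sw eqxx.
  have nwa : w != a.
    apply/eqP => e; have wp : w = p by apply: (@perm_inj _ s); rewrite sw e.
    by move: sp; rewrite /a -wp sw eqxx.
  have npw : p != w by rewrite eq_sym.
  have naw : a != w by rewrite eq_sym.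
  have [e1 [he1 pe1 we1]] := edge_ex lp lw npw.
  have ae1 : s e1 = e1 -> le a e1 by move=> h; rewrite /a -h hs.
  have me1 : s e1 != e1 by apply/negP => /eqP h; exact: (no3 lp la lw npa npw naw pe1 (ae1 h) we1).
  have [n1 En1] := highOrb e1 he1 me1.
  have wq : le w q by rewrite -(Inv w sw n1) -En1.
  case: (eqVneq (s a) p) => [sap|sap].
  + have par : forall n, iter n s p = p \/ iter n s p = a.
      elim=> [|n [IH|IH]]; [by left | by right; rewrite iterS IH | by left; rewrite iterS IH].
    have [w' [lw' nw'p nw'a nw'w]] := fourth lp la lw.
    have sw' : s w' = w'.
      apply/eqP/negPn/negP => h; have [n En] := lowOrb w' lw' h.
      by case: (par n) => e; move: En; rewrite e => E; [move: nw'p | move: nw'a]; rewrite E eqxx.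
    have npw' : p != w' by rewrite eq_sym.
    have naw' : a != w' by rewrite eq_sym.
    have [e2 [he2 pe2 w'e2]] := edge_ex lp lw' npw'.
    have me2 : s e2 != e2.
      apply/negP => /eqP h; have ae2 : le a e2 by rewrite /a -h hs.
      exact: (no3 lp la lw' npa npw' naw' pe2 ae2 w'e2).
    have [n2 En2] := highOrb e2 he2 me2.
    have we2 : le w e2 by rewrite En2 Inv.
    have nw'w' : w' != w := nw'w.
    exact: (no3 lp lw' lw npw' npw (nw'w) pe2 w'e2 we2).
  + have [e [he pe ae]] := edge_ex lp la npa.
    have lsa : ~~ hiB (s a) by rewrite hS.
    have nasa : a != s a.
      apply/negP => /eqP h; move: sp; rewrite -/a; apply/negP/negPn/eqP.
      by apply: perm_inj; exact: (esym h).
    have nps : p != s a by rewrite eq_sym.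
    have me : s e != e.
      apply/negP => /eqP h; have sae : le (s a) e by rewrite -h hs.
      exact: (no3 lp la lsa npa nps nasa pe ae sae).
    have [n En] := highOrb e he me.
    have we : le w e by rewrite En Inv.
    exact: (no3 lp la lw npa npw naw pe ae we).
-
  have mv : forall l, ~~ hiB l -> s l != l.
    by move=> l hl; have := Hno l; rewrite hl.
  set b := s a.
  have lb : ~~ hiB b by rewrite hS.
  have nab : a != b by rewrite eq_sym; apply: mv.
  have nbp : b != p.
    apply/negP => /eqP bp.
    have par : forall n, iter n s p = p \/ iter n s p = a.
      elim=> [|n [IH|IH]]; [by left | by right; rewrite iterS IH | by left; rewrite iterS IH].
    have [d [ld ndp nda _]] := fourth lp la la.
    have [n En] := lowOrb d ld (mv d ld).
    by case: (par n) => e; move: En; rewrite e => E; [move: ndp | move: nda]; rewrite E eqxx.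
  have npb : p != b by rewrite eq_sym.
  have [d [ld ndp nda ndb]] := fourth lp la lb.
  have npd : p != d by rewrite eq_sym.
  have nad : a != d by rewrite eq_sym.
  have nbd : b != d by rewrite eq_sym.
  have sbd : s b = d.
    have lc : ~~ hiB (s b) by rewrite hS.
    case: (cover4 lp la lb ld lc npa npb npd nab nad nbd) => // e.
    + exfalso.
      have cl : forall n, [\/ iter n s p = p, iter n s p = a | iter n s p = b].
        elim=> [|n [IH|IH|IH]]; [by apply: Or31 | apply: Or32 | apply: Or33 | apply: Or31];
          by rewrite iterS IH.
      have [n En] := lowOrb d ld (mv d ld).
      case: (cl n) => E; move: En; rewrite E => E'.
      * by move: ndp; rewrite E' eqxx.
      * by move: nda; rewrite E' eqxx.
      * by move: ndb; rewrite E' eqxx.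
    + have bp : b = p by apply: (@perm_inj _ s); rewrite e.
      by move: nbp; rewrite bp eqxx.
    + by move: (mv b lb); rewrite e eqxx.
  have sdp : s d = p.
    have lc : ~~ hiB (s d) by rewrite hS.
    case: (cover4 lp la lb ld lc npa npb npd nab nad nbd) => // e.
    + have dp : d = p by apply: (@perm_inj _ s); rewrite e.
      by move: ndp; rewrite dp eqxx.
    + have da : d = a by apply: (@perm_inj _ s); rewrite e.
      by move: nda; rewrite da eqxx.
    + by move: (mv d ld); rewrite e eqxx.
  have [e [he pe be]] := edge_ex lp lb npb.
  have [e' [he' pe' ae']] := edge_ex lp la npa.
  have sse : s (s e) = e.
    apply: (edge_uniq lp lb npb) => //; first by rewrite hS hS.
    - by rewrite -{1}sdp -sbd hs hs.
    - by rewrite /b /a hs hs.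
  have me : s e != e.
    apply/negP => /eqP h; have ae : le a e by rewrite /a -h hs.
    exact: (no3 lp la lb npa npb nab pe ae be).
  have me' : s e' != e'.
    apply/negP => /eqP h; have be' : le b e' by rewrite /b -h hs.
    exact: (no3 lp la lb npa npb nab pe' ae' be').
  have [n En] := highOrb e he me.
  have [m Em] := highOrb e' he' me'.
  have ssq : s (s q) = q.
    apply: (iter_inj n); rewrite -!iter_comm -En; exact: sse.
  have sse' : s (s e') = e' by rewrite Em !iter_comm ssq.
  have be' : le b e' by rewrite -sse' /b /a hs hs.
  exact: (no3 lp la lb npa npb nab pe' ae' be').
Qed.

Definition gfun (pi : {perm 'I_4}) (t : T) : T :=
  odflt t [pick t' | ph t' == [set pi i | i in ph t]].

Lemma gfunE pi t : ph (gfun pi t) = [set pi i | i in ph t].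
Proof.
have [t0 h0] : exists t0, ph t0 = [set pi i | i in ph t].
  by apply: preim; rewrite card_imset ?phcard //; apply: perm_inj.
rewrite /gfun; case: pickP => [t' /eqP //|H].
by move: (H t0); rewrite h0 eqxx.
Qed.

Lemma gfun_inj pi : injective (gfun pi).
Proof.
move=> a b e; apply: phinj; apply: (imset_inj (@perm_inj _ pi)).
by rewrite -!gfunE e.
Qed.

Definition gperm pi := perm (@gfun_inj pi).

Lemma gpermE pi t : ph (gperm pi t) = [set pi i | i in ph t].
Proof. by rewrite permE gfunE. Qed.

Lemma subset_imset_perm (U : finType) (pi : {perm U}) (A B : {set U}) :
  ([set pi i | i in A] \subset [set pi i | i in B]) = (A \subset B).
Proof.
apply/idP/idP => [h|h]; last exact: imsetS.
apply/subsetP => x xA; have := subsetP h (pi x) (imset_f _ xA).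
by rewrite (mem_imset _ _ (@perm_inj _ pi)).
Qed.

Lemma gperm_aut pi : isAut le (gperm pi).
Proof. by move=> a b; rewrite !leE !gpermE subset_imset_perm. Qed.

Lemma imset3 (U V : finType) (f : U -> V) a b c :
  [set f x | x in [set a; b; c]] = [set f a; f b; f c].
Proof.
apply/setP => y; apply/imsetP/set3P => [[x /set3P [] -> ->]|[] ->].
- exact: Or31.
- exact: Or32.
- exact: Or33.
- by exists a; rewrite ?inE ?eqxx.
- by exists b; rewrite ?inE ?eqxx ?orbT.
- by exists c; rewrite ?inE ?eqxx ?orbT.
Qed.

Lemma tperm_fix (i j : 'I_4) (X : {set 'I_4}) :
  ([set tperm i j m | m in X] == X) = ((i \in X) == (j \in X)).
Proof.
rewrite eqEcard card_imset ?leqnn ?andbT; last exact: perm_inj.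
apply/subsetP/eqP => [H|E].
- apply/idP/idP => h.
  + by have := H _ (imset_f (tperm i j) h); rewrite tpermL.
  + by have := H _ (imset_f (tperm i j) h); rewrite tpermR.
- move=> y /imsetP [m mX ->]; case: tpermP => [e|e|_ _ //]; subst m.
  + by rewrite -E.
  + by rewrite E.
Qed.

Lemma charX (i j k l : 'I_4) (X : {set 'I_4}) : uniq [:: i; j; k; l] ->
  0 < #|X| <= 2 -> i \in X -> j \notin X ->
  [\/ X = [set i], X = [set i; k] | X = [set i; l]].
Proof.
move=> u hX iX jX.
have : #|X| = 1 \/ #|X| = 2 by lia.
case=> [/eqP/cards1P [m E]|/eqP/cards2P [a [b [nab E]]]].
  by apply: Or31; move: iX; rewrite E => /set1P ->.
have ik : i != k by move: u; rewrite /= !inE !negb_or => /and4P [/and3P[_ ? _] _ _ _].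
have il : i != l by move: u; rewrite /= !inE !negb_or => /and4P [/and3P[_ _ ?] _ _ _].
have X2 : #|X| = 2 by apply/eqP; rewrite E cards2 nab.
have E2 : forall c, c \in X -> i != c -> X = [set i; c].
  move=> c cX nic; apply/eqP; rewrite eq_sym eqEcard cards2 nic X2 leqnn andbT.
  by apply/subsetP => m /set2P [] ->.
case kX: (k \in X); first by apply: Or32; apply: E2.
apply: Or33; apply: E2 => //.
have [m mX nmi] : exists2 m, m \in X & m != i.
  case: (eqVneq a i) => [eai|nai]; last by exists a; rewrite // E !inE eqxx.
  by exists b; rewrite ?E ?inE ?eqxx ?orbT // -eai eq_sym.
have := ord_cover4 m u; rewrite !inE => /or4P [] /eqP e; subst m.
- by rewrite eqxx in nmi.
- by rewrite mX in jX.
- by rewrite mX in kX.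
- by [].
Qed.

Lemma imset2 (U V : finType) (f : U -> V) a b :
  [set f x | x in [set a; b]] = [set f a; f b].
Proof.
apply/setP => y; apply/imsetP/set2P => [[x /set2P [] -> ->]|[] ->].
- by left.
- by right.
- by exists a; rewrite ?inE ?eqxx.
- by exists b; rewrite ?inE ?eqxx ?orbT.
Qed.

Lemma Vsh (a b c : 'I_4) x y z : a != b -> a != c -> b != c ->
  ph x = [set a] -> ph y = [set a; b] -> ph z = [set a; c] -> Vshape le x y z.
Proof.
move=> nab nac nbc hx hy hz.
have nxy : x != y by apply/eqP => e; move: (congr1 (fun t => #|ph t|) e); rewrite /= hx hy cards1 cards2 nab.
have nxz : x != z by apply/eqP => e; move: (congr1 (fun t => #|ph t|) e); rewrite /= hx hz cards1 cards2 nac.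
have byz : b \notin ph z by rewrite hz !inE negb_or eq_sym nab nbc.
have czy : c \notin ph y by rewrite hy !inE negb_or eq_sym nac eq_sym nbc.
split.
- by rewrite /lt nxy leE hx hy sub1set !inE eqxx.
- by rewrite /lt nxz leE hx hz sub1set !inE eqxx.
- by apply/eqP => e; move: byz; rewrite -e hy !inE eqxx orbT.
- rewrite leE; apply/negP => /subsetP h; move: byz; rewrite h //.
  by rewrite hy !inE eqxx orbT.
- rewrite leE; apply/negP => /subsetP h; move: czy; rewrite h //.
  by rewrite hz !inE eqxx orbT.
Qed.

Lemma tgen (i j : 'I_4) : i != j -> exists S,
  [/\ generator_fam le leV [set: 'I_3] 2 (gperm (tperm i j)) S, S 0 != S 1,
      iso_sub le (S 0) leV [set: 'I_3] &
      forall t, i \in ph t -> j \notin ph t -> t \in S 0].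
Proof.
move=> nij.
have [k hk] := ord_fourth i j j.
have [l hl] := ord_fourth i j k.
move: hk hl; rewrite !inE !negb_or => /and3P [nki nkj _] /and3P [nli nlj nlk].
have u : uniq [:: i; j; k; l].
  by rewrite /= !inE !negb_or nij !(eq_sym i) nki nli !(eq_sym j) nkj nlj eq_sym nlk.
have u' : uniq [:: j; i; k; l].
  by rewrite /= !inE !negb_or eq_sym nij !(eq_sym i) nki nli !(eq_sym j) nkj nlj eq_sym nlk.
have nik : i != k by rewrite eq_sym.
have nil : i != l by rewrite eq_sym.
have njk : j != k by rewrite eq_sym.
have njl : j != l by rewrite eq_sym.
have nkl : k != l by rewrite eq_sym.
have [v hv] := low_ex i.
have [v' hv'] := low_ex j.
have [ek hek] : exists t, ph t = [set i; k] by apply: preim; rewrite cards2 nik.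
have [el hel] : exists t, ph t = [set i; l] by apply: preim; rewrite cards2 nil.
have [e'k he'k] : exists t, ph t = [set j; k] by apply: preim; rewrite cards2 njk.
have [e'l he'l] : exists t, ph t = [set j; l] by apply: preim; rewrite cards2 njl.
set g := gperm (tperm i j).
have gk : tperm i j k = k by rewrite tpermD // eq_sym.
have gl : tperm i j l = l by rewrite tpermD // eq_sym.
have gv : g v = v' by apply: phinj; rewrite gpermE hv imset_set1 tpermL hv'.
have gv' : g v' = v by apply: phinj; rewrite gpermE hv' imset_set1 tpermR hv.
have gek : g ek = e'k by apply: phinj; rewrite gpermE hek imset2 tpermL gk he'k.
have ge'k : g e'k = ek by apply: phinj; rewrite gpermE he'k imset2 tpermR gk hek.
have gel : g el = e'l by apply: phinj; rewrite gpermE hel imset2 tpermL gl he'l.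
have ge'l : g e'l = el by apply: phinj; rewrite gpermE he'l imset2 tpermR gl hel.
have memS0 : forall t, (t \in [set v; ek; el]) = (i \in ph t) && (j \notin ph t).
  move=> t; apply/set3P/andP => [[] ->|[it jt]].
  - by rewrite hv !inE eqxx (eq_sym j i) nij.
  - by rewrite hek !inE eqxx /= (eq_sym j i) (negbTE nij) (negbTE njk).
  - by rewrite hel !inE eqxx /= (eq_sym j i) (negbTE nij) (negbTE njl).
  - case: (charX u (phcard t) it jt) => e.
    + by apply: Or31; apply: phinj; rewrite e hv.
    + by apply: Or32; apply: phinj; rewrite e hek.
    + by apply: Or33; apply: phinj; rewrite e hel.
have memS1 : forall t, (t \in [set v'; e'k; e'l]) = (j \in ph t) && (i \notin ph t).
  move=> t; apply/set3P/andP => [[] ->|[it jt]].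
  - by rewrite hv' !inE eqxx nij.
  - by rewrite he'k !inE eqxx /= (negbTE nij) (negbTE nik).
  - by rewrite he'l !inE eqxx /= (negbTE nij) (negbTE nil).
  - case: (charX u' (phcard t) it jt) => e.
    + by apply: Or31; apply: phinj; rewrite e hv'.
    + by apply: Or32; apply: phinj; rewrite e he'k.
    + by apply: Or33; apply: phinj; rewrite e he'l.
have V0 : Vshape le v ek el by apply: (Vsh nik nil nkl).
have V1 : Vshape le v' e'k e'l by apply: (Vsh njk njl nkl).
have gen := vgen_build Hpo HhiB (gperm_aut (tperm i j)) V0 V1.
have im0 : [set g t | t in [set v; ek; el]] = [set v'; e'k; e'l] by rewrite imset3 gv gek gel.
have im1 : [set g t | t in [set v'; e'k; e'l]] = [set v; ek; el] by rewrite imset3 gv' ge'k ge'l.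
have SigE : Sigma g = [set v; ek; el] :|: [set v'; e'k; e'l].
  apply/setP => t; rewrite inSigma inE memS0 memS1.
  rewrite -(inj_eq phinj) gpermE tperm_fix.
  by case: (i \in ph t); case: (j \in ph t).
have disj : [set v; ek; el] :&: [set v'; e'k; e'l] = set0.
  apply/setP => t; rewrite inE memS0 memS1 inE.
  by case: (i \in ph t); case: (j \in ph t).
exists (fun n => if n == 0 then [set v; ek; el] else [set v'; e'k; e'l]); split => /=.
- exact: gen.
- apply/eqP => e; have : v \in [set v'; e'k; e'l] by rewrite -e !inE eqxx.
  by rewrite memS1 hv !inE eqxx andbF.
- exact: iso_V.
- by move=> t it jt; rewrite memS0 it jt.
Qed.

Lemma tstep (ok : {perm T} -> Prop) (i j : 'I_4) t : i != j -> ok (gperm (tperm i j)) ->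
  i \in ph t -> j \notin ph t -> R1_by le leV ok [set: 'I_3] 2 t (gperm (tperm i j) t).
Proof.
move=> nij hok it jt; have [S [gen ne iso mem]] := tgen nij.
have gen' := gen; case: gen' => _ _ [_ [Him _]] _ _.
exists (gperm (tperm i j)), S, 0, 1, 1; split; split => //.
- exact: mem.
- by rewrite -(Him 0 isT); apply: imset_f; apply: mem.
Qed.

Lemma conn (ok : {perm T} -> Prop) (Hok : forall i j, i != j -> ok (gperm (tperm i j))) x y :
  hiB x = hiB y -> clos_refl_sym_trans T (R1_by le leV ok [set: 'I_3] 2) x y.
Proof.
move=> hxy; case hx: (hiB x).
- have hy : hiB y by rewrite -hxy.
  have emove : forall t (a b c : 'I_4), ph t = [set a; b] -> a != b -> c != a -> c != b ->
      exists t', ph t' = [set c; b] /\ clos_refl_sym_trans T (R1_by le leV ok [set: 'I_3] 2) t t'.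
    move=> t a b c E nab nca ncb; have nac : a != c by rewrite eq_sym.
    exists (gperm (tperm a c) t); split.
    + by rewrite gpermE E imset2 tpermL tpermD // eq_sym.
    + apply: rst_step; apply: tstep => //; first exact: Hok.
      * by rewrite E !inE eqxx.
      * by rewrite E !inE negb_or ncb andbT.
  have [a [b [nab Ex]]] := hiEB hx.
  have [c [d [ncd Ey]]] := hiEB hy.
  have eqE : forall t, ph t = ph y -> t = y by move=> t h; apply: phinj.
  case: (eqVneq c a) => [eca|nca].
  + subst c; case: (eqVneq d b) => [edb|ndb]; first by subst d; rewrite (eqE x); [apply: rst_refl | rewrite Ex Ey].
    have nda : d != a by rewrite eq_sym.
    have nba : b != a by rewrite eq_sym.
    have [t' [E' hc]] := emove x b a d (etrans Ex (setUC _ _)) nba ndb nda.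
    by rewrite -(eqE t') // E' Ey setUC.
  case: (eqVneq c b) => [ecb|ncb].
  + subst c; case: (eqVneq d a) => [eda|nda]; first by subst d; rewrite (eqE x); [apply: rst_refl | rewrite Ex Ey setUC].
    have ndb : d != b by rewrite eq_sym.
    have [t' [E' hc]] := emove x a b d Ex nab nda ndb.
    by rewrite -(eqE t') // E' Ey setUC.
  have [t1 [E1 h1]] := emove x a b c Ex nab nca ncb.
  case: (eqVneq d b) => [edb|ndb]; first by subst d; rewrite -(eqE t1) // E1 Ey.
  have ndc : d != c by rewrite eq_sym.
  have nbc : b != c by rewrite eq_sym.
  have [t2 [E2 h2]] := emove t1 b c d (etrans E1 (setUC _ _)) nbc ndb ndc.
  apply: rst_trans h1 _; by rewrite -(eqE t2) // E2 Ey setUC.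
- have hy : ~~ hiB y by rewrite -hxy hx.
  have [a Ex] := loE (negbT hx).
  have [b Ey] := loE hy.
  case: (eqVneq a b) => [eab|nab]; first by subst b; rewrite (phinj (etrans Ex (esym Ey))); apply: rst_refl.
  have -> : y = gperm (tperm a b) x by apply: phinj; rewrite gpermE Ex imset_set1 tpermL Ey.
  apply: rst_step; apply: tstep => //; first exact: Hok.
  + by rewrite Ex inE.
  + by rewrite Ex inE eq_sym.
Qed.

Lemma in_gen_trivial (B' : {set 'I_3}) r' A' g : #|B'| < 3 ->
  in_gen (admissible le leV B' r' A') g -> g = 1%g.
Proof.
move=> hB; elim=> [//|s t [[S gen] _] _ ->].
by rewrite (KL gen hB) mulg1.
Qed.

Lemma tprime (i j : 'I_4) : i != j -> prime_ok le leV [set: 'I_3] 2 (gperm (tperm i j)).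
Proof.
move=> nij; have [S [gen ne iso mem]] := tgen nij.
exists (S 0); split => //.
- exact: (@linked_h2 T le hiB HhiB (S 0)).
- split; first by exists S.
  move=> b nb; exfalso; apply: nb.
  have [h [hinj [himg hle]]] := iso.
  have : i0 \in [set h x | x in S 0] by rewrite himg inE.
  case/imsetP => p pA hp.
  have : i1 \in [set h x | x in S 0] by rewrite himg inE.
  case/imsetP => q qA hq.
  have lpq : lt le p q.
    rewrite /lt -hle // -hp -hq andbT; apply/eqP => e; subst q; by rewrite -hp in hq.
  have /andP [lp hq'] := HhiB lpq.
  have Htrue : forall i j, i != j -> (fun _ : {perm T} => True) (gperm (tperm i j)) by [].
  case hb: (hiB b).
  + exists q => //; apply: (conn Htrue); by rewrite hb.
  + exists p => //; apply: (conn Htrue); by rewrite hb (negbTE lp).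
- move=> [B' [r' [S' [hr' [A' [_ _ HS']] [x Sx] _ hB]]]].
  have hB' : #|B'| < 3.
    case: hB => [pr|[_ ?]]; last by lia.
    by have := proper_card pr; rewrite cardsT card_ord.
  have [g [hg gx]] := (HS' x).1 Sx.
  by move: gx; rewrite (in_gen_trivial hB' hg) perm1 eqxx.
Qed.

Definition j0 : 'I_4 := @Ordinal 4 0 isT.
Definition j1 : 'I_4 := @Ordinal 4 1 isT.
Definition j2 : 'I_4 := @Ordinal 4 2 isT.

Lemma bwd_main : retract_prime_iso le leV 2 leC2 /\ ~ iso_sub le [set: T] leC2 [set: 'I_2].
Proof.
have Hpok : forall i j, i != j -> prime_ok le leV [set: 'I_3] 2 (gperm (tperm i j)).
  by move=> i j; apply: tprime.
have [v0 h0] := low_ex j0.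
have [v1 h1] := low_ex j1.
have [v2 h2] := low_ex j2.
have l0 : ~~ hiB v0 by rewrite /hiB h0 cards1.
have [w hw] : exists w, ph w = [set j0; j1] by apply: preim; rewrite cards2.
have hiw : hiB w by rewrite /hiB hw cards2.
split.
- pose f t : 'I_2 := if hiB t then ord_max else ord0.
  exists f; split.
    move=> u; case: u => [[|[|//]] hu].
    + by exists v0; rewrite /f (negbTE l0); apply: val_inj.
    + by exists w; rewrite /f hiw; apply: val_inj.
  split.
    move=> x y; split.
    + move=> e; apply: conn => //.
      by move: e; rewrite /f; case: (hiB x); case: (hiB y).
    + move/(autrel_clos (fun a b (h : R1_by le leV (prime_ok le leV [set: 'I_3] 2) [set: 'I_3] 2 a b) => R1_autrel h)).
      by case=> g hg <-; rewrite /f aut_hiB.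
  move=> u v; split.
  + rewrite /leC2; case: u => [[|[|//]] hu]; case: v => [[|[|//]] hv] //= _.
    * by exists v0, v0; split; rewrite ?(le_refl Hpo) // /f (negbTE l0); apply: val_inj.
    * have [l ll] := Hhi2B hiw.
      have /andP [hl _] := HhiB ll.
      by exists l, w; split; rewrite ?(lt_le ll) // /f ?hiw ?(negbTE hl); apply: val_inj.
    * by exists w, w; split; rewrite ?(le_refl Hpo) // /f hiw; apply: val_inj.
  + case=> x [y [<- <- lxy]]; case: (eqVneq x y) => [->|nxy]; first by rewrite /leC2.
    have /andP [hx hy] := HhiB (lt_of_le lxy nxy).
    by rewrite /leC2 /f (negbTE hx) hy.
- move=> [h [hinj [_ _]]].
  have n01 : v0 != v1 by rewrite (low_neq h0 h1).
  have n02 : v0 != v2 by rewrite (low_neq h0 h2).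
  have n12 : v1 != v2 by rewrite (low_neq h1 h2).
  have d : forall a b, a != b -> nat_of_ord (h a) <> nat_of_ord (h b).
    move=> a b nab e; move/eqP: nab; apply; apply: hinj; rewrite ?inE //; exact: val_inj.
  have := d _ _ n01; have := d _ _ n02; have := d _ _ n12.
  have := ltn_ord (h v0); have := ltn_ord (h v1); have := ltn_ord (h v2).
  lia.
Qed.

End Bwd.

Theorem mainTheorem12 (T : finType) (le : rel T) :
  poset_ax le ->
  ((retract_prime_iso le leV 2 leC2 /\ ~ iso_sub le [set: T] leC2 [set: 'I_2])
   <-> iso_sub le [set: T] leS S3_01).
Proof.
move=> Hpo; split.
- case=> [[f [Hsurj [Heqv Hord]]] HnC2].
  exact: (fwd_iso Hpo Hsurj Heqv Hord HnC2).
- case=> ph [Hinj [Himg Hle]].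
  exact: (bwd_main Hpo Hinj Himg Hle).
Qed.
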